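(* For all $r\ge0$ and $2\le n\le\infty$, a morphism $f\colon A\to B$ of $n$-multicomplexes has the right lifting property with respect to every morphism in $I^n_r$ if and only if $f$ is an $E_r$-quasi-isomorphism and $f$ has the right lifting property with respect to every morphism in $J^n_0\cup J^n_r$. In other words, $I^n_r\text{-inj}=\mathcal E^n_r\cap J^n_0\text{-inj}\cap J^n_r\text{-inj}$.
   Context: Throughout, $R$ is a commutative unital ring. For $1\le n\le\infty$, an $n$-multicomplex is a $\mathbb Z\times\mathbb Z$-bigraded $R$-module $A=\{A^{p,q}\}$ with $R$-linear maps $d_i\colon A\to A$ ($i\ge0$) of bidegree $(-i,1-i)$ such that $\sum_{i+j=l}(-1)^id_id_j=0$ for all $l\ge0$, and $d_i=0$ for all $i\ge n$. Morphisms are bidegree $(0,0)$ maps commuting with all $d_i$; category $\mathrm{Ch}_n$. For a set $S$ of morphisms, $S$-inj is the class of morphisms with the right lifting property with respect to all of $S$. Spectral sequence: $Z_0^{p,q}(A)=A^{p,q}$; for $r\ge1$, $Z_r^{p,q}(A)$ is the set of $a_0\in A^{p,q}$ for which there exist $a_j\in A^{p-j,q-j}$ ($1\le j\le r-1$) with $\sum_{i+j=l}(-1)^id_ia_j=0$ for $0\le l\le r-1$. $B_0=0$, $B_1^{p,q}(A)=A^{p,q}\cap\operatorname{im}d_0$, and for $r\ge2$, $B_r^{p,q}(A)$ is the set of $x\in A^{p,q}$ for which there exist $b_i\in A^{p+r-1-i,q+r-2-i}$ ($0\le i\le r-1$) with $x=\sum_{i=0}^{r-1}(-1)^id_ib_{r-1-i}$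 and $\sum_{i=0}^l(-1)^id_ib_{l-i}=0$ for $0\le l\le r-2$. $E_r^{p,q}(A)=Z_r^{p,q}(A)/B_r^{p,q}(A)$, the spectral sequence of the column-filtered total complex. A morphism $f$ is an $E_r$-quasi-isomorphism if $E_{r+1}(f)$ is an isomorphism; $\mathcal E^n_r$ denotes the class of these in $\mathrm{Ch}_n$. Representing objects: $\mathbb D^n(p,q)$ is the free $n$-multicomplex on one generator in bidegree $(p,q)$. $\mathcal ZW^n_0(p,q)=\mathbb D^n(p,q)$ with generator $a_0$. $\mathcal ZW^n_1(p,q)$ is the pushout in $\mathrm{Ch}_n$ of $0\leftarrow\mathbb D^n(p,q+1)\to\mathbb D^n(p,q)$, the right map sending the generator to $d_0a_0$. For $r\ge2$, $\mathcal ZW^n_r(p,q)$ is the pushout in $\mathrm{Ch}_n$ of $\mathcal ZW^n_{r-1}(p,q)\leftarrow\mathbb D^n(p-r+1,q-r+2)\to\mathbb D^n(p-r+1,q-r+1)$, where, writing $x$ for the generator of the middle object and $a_{r-1}$ for that of the right one, the left map sends $x\mapsto\sum_{i=1}^{r-1}(-1)^{i+1}d_ia_{r-1-i}$ and the right map sends $x\mapsto d_0a_{r-1}$; images of $a_0,\dots,a_{r-1}$ keep their names ($a_i$ in bidegree $(p-i,q-i)$). $\mathcal BW^n_0(p,q-1)=0$, $\mathcal BW^n_1(p,q-1)=\mathbb D^n(p,q-1)$, and for $r\ge2$, $\mathcal BW^n_r(p,q-1)=\mathcal ZW^n_{r-1}(p+r-1,q+r-2)\oplus\mathbb D^n(p,q-1)\oplus\mathcal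 ZW^n_{r-1}(p-1,q-1)$. The morphism $\iota_r\colon\mathcal ZW^n_r(p,q)\to\mathcal BW^n_r(p,q-1)$: $\iota_0=0$; $\iota_1(a_0)=d_0e$ where $e$ generates $\mathbb D^n(p,q-1)$; for $r\ge2$, writing $b_0,\dots,b_{r-2}$, $e$, $c_0,\dots,c_{r-2}$ for the generators of the three summands, $\iota_r(a_j)=d_je+(-1)^j\sum_{i=j+1}^{r+j-1}(-1)^id_ib_{r+j-1-i}+c_{j-1}$ ($0\le j\le r-1$, $c_{-1}:=0$). Generating sets: $I^n_r=\{\iota_{r+1}\colon\mathcal ZW^n_{r+1}(p,q)\to\mathcal BW^n_{r+1}(p,q-1)\}_{p,q\in\mathbb Z}$ and $J^n_r=\{0\to\mathcal ZW^n_r(p,q)\}_{p,q\in\mathbb Z}$. *)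

(* Defs.v *)
From HB Require Import structures.
From mathcomp Require Import all_boot all_order all_algebra.
Set Implicit Arguments.
Unset Strict Implicit.
Unset Printing Implicit Defensive.
Import Order.TTheory GRing.Theory Num.Theory.
Local Open Scope ring_scope.

Section Multicomplexes.
Variable R : comPzRingType.

(* n : option nat ;  Some m = the finite value m,  None = infinity. *)
Definition above (n : option nat) (i : nat) : bool :=
  if n is Some m then (m <= i)%N else false.

Definition is_lin (U V : lmodType R) (f : U -> V) : Prop :=
  forall (a : R) (u v : U), f (a *: u + v) = a *: f u + f v.

(* Transport between bigraded pieces: the identity when the bidegrees agree,
   zero otherwise. *)
Definition tr (A : int -> int -> lmodType R) (p q p' q' : int) (x : A p q)
  : A p' q' :=
  match p =P p', q =P q' with
  | ReflectT e1, ReflectT e2 =>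
      eq_rect q (fun y => A p' y) (eq_rect p (fun z => A z q) x p' e1) q' e2
  | _, _ => 0
  end.
Arguments tr {A p q p' q'} x.

(* The structure map d_i of bidegree (-i,1-i) is encoded
   as the family of all its "matrix blocks" dd i p q p' q' : A^{p,q} -> A^{p',q'},
   which vanish unless (p',q') = (p-i, q+1-i). *)
Unset Implicit Arguments.
Record mcx (n : option nat) := Mcx {
  obj :> int -> int -> lmodType R;
  dd : nat -> forall p q p' q' : int, obj p q -> obj p' q';
  dd_lin : forall i p q p' q', is_lin (dd i p q p' q');
  dd_deg : forall i p q p' q' (x : obj p q),
      (p' != p - i%:Z) || (q' != q + 1 - i%:Z) -> dd i p q p' q' x = 0;
  dd_vanish : forall i p q p' q' (x : obj p q), above n i -> dd i p q p' q' x = 0;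
  (* sum_{i+j=l} (-1)^i d_i d_j = 0 *)
  dd_rel : forall (l : nat) (p q p' q' : int) (x : obj p q),
      \sum_(i < l.+1)
         (-1) ^+ i *: dd i (p - (l - i)%N%:Z) (q + 1 - (l - i)%N%:Z) p' q'
                         (dd (l - i) p q (p - (l - i)%N%:Z) (q + 1 - (l - i)%N%:Z) x)
      = 0
}.
Arguments obj {n} m.
Arguments dd {n} m i {p q p' q'} x.

Record mhom (n : option nat) (A B : mcx n) := MHom {
  hf : forall p q, A p q -> B p q;
  hf_lin : forall p q, is_lin (hf p q);
  hf_comm : forall i p q p' q' (x : A p q),
      hf p' q' (dd A i (p' := p') (q' := q') x) = dd B i (hf p q x)
}.
Arguments mhom {n}.
Arguments hf {n A B} m {p q} x.
Set Implicit Arguments.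

Definition heq (n : option nat) (A B : mcx n) (f g : mhom A B) : Prop :=
  forall p q (x : A p q), hf f x = hf g x.

Definition rlp (n : option nat) (X Y A B : mcx n) (i : mhom X Y) (f : mhom A B) : Prop :=
  forall (u : mhom X A) (v : mhom Y B),
    (forall p q (x : X p q), hf f (hf u x) = hf v (hf i x)) ->
    exists h : mhom Y A,
      (forall p q (x : X p q), hf h (hf i x) = hf u x) /\
      (forall p q (y : Y p q), hf f (hf h y) = hf v y).

Lemma zero_lin (U V : lmodType R) : is_lin (fun _ : U => (0 : V)).
Proof. by move=> a u v; rewrite scaler0 addr0. Qed.

Definition zero_mcx (n : option nat) : mcx n.
Proof.
refine (@Mcx n (fun _ _ => 'rV[R]_0) (fun _ _ _ _ _ _ => 0) _ _ _ _).
- by move=> *; apply: zero_lin.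
- by [].
- by [].
- by move=> *; rewrite big1 // => i _; rewrite scaler0.
Defined.

Lemma lin0 (U V : lmodType R) (f : U -> V) : is_lin f -> f 0 = 0.
Proof.
move=> hf; have := hf 1 0 0; rewrite scaler0 addr0 scale1r => h.
by apply: (@addrI _ (f 0)); rewrite addr0 -h.
Qed.

Definition zero_hom (n : option nat) (Z : mcx n) : mhom (zero_mcx n) Z.
Proof.
refine (@MHom n (zero_mcx n) Z (fun _ _ _ => 0) _ _).
- by move=> *; apply: zero_lin.
- by move=> i p q p' q' x /=; rewrite lin0 //; apply: dd_lin.
Defined.

Definition zrel (n : option nat) (A : mcx n) (P Q : int)
  (a : forall j : nat, A (P - j%:Z) (Q - j%:Z)) (l : nat) : Prop :=
  \sum_(j < l.+1)
     (-1) ^+ (l - j) *: dd A (l - j) (p' := P - l%:Z) (q' := Q - l%:Z + 1) (a j) = 0.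

Definition Zr (n : option nat) (r : nat) (A : mcx n) (p q : int) (x : A p q) : Prop :=
  match r with
  | 0 => True
  | _ => exists a : forall j : nat, A (p - j%:Z) (q - j%:Z),
           tr (a 0%N) = x /\ forall l : nat, (l < r)%N -> zrel a l
  end.

Definition Br (n : option nat) (r : nat) (A : mcx n) (p q : int) (x : A p q) : Prop :=
  match r with
  | 0 => x = 0
  | 1 => exists b : A p (q - 1), x = dd A 0 b
  | _ => exists b : forall k : nat, A (p + r%:Z - 1 - k%:Z) (q + r%:Z - 2 - k%:Z),
           x = \sum_(i < r) (-1) ^+ i *: dd A i (b (r - 1 - i)%N)
           /\ forall l : nat, (l <= r - 2)%N ->
                \sum_(i < l.+1) (-1) ^+ i *:
                   dd A i (p' := p + r%:Z - 1 - l%:Z) (q' := q + r%:Z - 1 - l%:Z)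
                      (b (l - i)%N) = 0
  end.

(* f is an E_r-quasi-isomorphism: E_{r+1}(f) : Z_{r+1}/B_{r+1} -> Z_{r+1}/B_{r+1}
   is bijective (surjective and injective) in every bidegree. *)
Definition Eqi (n : option nat) (r : nat) (A B : mcx n) (f : mhom A B) : Prop :=
  forall p q : int,
    (forall z : B p q, Zr r.+1 z ->
       exists z' : A p q, Zr r.+1 z' /\ Br r.+1 (hf f z' - z)) /\
    (forall z : A p q, Zr r.+1 z -> Br r.+1 (hf f z) -> Br r.+1 z).

(* (Z, a) is (a realisation of) ZW^n_s(p,q) with its generators a_0,...,a_{s-1}
   (a_0 only when s = 0): the iterated pushout of free multicomplexes,
   i.e. the multicomplex generated by the a_j subject to the relations
   zrel l, l < s. *)
Definition IsZW (n : option nat) (s : nat) (p q : int) (Z : mcx n)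
  (a : forall j : nat, Z (p - j%:Z) (q - j%:Z)) : Prop :=
  (forall l : nat, (l < s)%N -> zrel a l) /\
  forall (C : mcx n) (c : forall j : nat, C (p - j%:Z) (q - j%:Z)),
    (forall l : nat, (l < s)%N -> zrel c l) ->
    (exists phi : mhom Z C, forall j : nat, (j < maxn s 1)%N -> hf phi (a j) = c j) /\
    (forall phi psi : mhom Z C,
       (forall j : nat, (j < maxn s 1)%N -> hf phi (a j) = hf psi (a j)) -> heq phi psi).

Arguments IsZW {n} s p q {Z} a.

(* (W, b, e, c) is (a realisation of) BW^n_s(p,q-1) for s >= 1:
   ZW_{s-1}(p+s-1,q+s-2) (+) D(p,q-1) (+) ZW_{s-1}(p-1,q-1) with generators
   b_0..b_{s-2}, e, c_0..c_{s-2}; for s = 1 this is D(p,q-1) generated by e. *)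
Definition IsBW (n : option nat) (s : nat) (p q : int) (W : mcx n)
  (b : forall j : nat, W (p + s%:Z - 1 - j%:Z) (q + s%:Z - 2 - j%:Z))
  (e : W p (q - 1))
  (c : forall j : nat, W (p - 1 - j%:Z) (q - 1 - j%:Z)) : Prop :=
  (forall l : nat, (l < s.-1)%N -> zrel b l) /\
  (forall l : nat, (l < s.-1)%N -> zrel c l) /\
  forall (C : mcx n)
         (b' : forall j : nat, C (p + s%:Z - 1 - j%:Z) (q + s%:Z - 2 - j%:Z))
         (e' : C p (q - 1))
         (c' : forall j : nat, C (p - 1 - j%:Z) (q - 1 - j%:Z)),
    (forall l : nat, (l < s.-1)%N -> zrel b' l) ->
    (forall l : nat, (l < s.-1)%N -> zrel c' l) ->
    (exists phi : mhom W C,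
        (forall j : nat, (j < s.-1)%N -> hf phi (b j) = b' j) /\
        hf phi e = e' /\
        (forall j : nat, (j < s.-1)%N -> hf phi (c j) = c' j)) /\
    (forall phi psi : mhom W C,
        (forall j : nat, (j < s.-1)%N -> hf phi (b j) = hf psi (b j)) ->
        hf phi e = hf psi e ->
        (forall j : nat, (j < s.-1)%N -> hf phi (c j) = hf psi (c j)) ->
        heq phi psi).

Arguments IsBW {n} s p q {W} b e c.

Definition iota_spec (n : option nat) (s : nat) (p q : int) (Z W : mcx n)
  (a : forall j : nat, Z (p - j%:Z) (q - j%:Z))
  (b : forall j : nat, W (p + s%:Z - 1 - j%:Z) (q + s%:Z - 2 - j%:Z))
  (e : W p (q - 1))
  (c : forall j : nat, W (p - 1 - j%:Z) (q - 1 - j%:Z))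
  (i : mhom Z W) : Prop :=
  forall j : nat, (j < s)%N ->
    hf i (a j) =
      dd W j (p' := p - j%:Z) (q' := q - j%:Z) e
      + (-1) ^+ j *: \sum_(j.+1 <= k < s + j)
                        (-1) ^+ k *: dd W k (p' := p - j%:Z) (q' := q - j%:Z)
                                            (b (s + j - 1 - k)%N)
      + (if j is j'.+1 then tr (c j') else 0).

Arguments iota_spec {n} s p q {Z W} a b e c i.

(* f in I^n_r-inj : RLP against iota_{r+1} : ZW_{r+1}(p,q) -> BW_{r+1}(p,q-1),
   for all p, q. *)
Definition Iinj (n : option nat) (r : nat) (A B : mcx n) (f : mhom A B) : Prop :=
  forall (p q : int) (Z W : mcx n) (a : forall j : nat, Z (p - j%:Z) (q - j%:Z))
         (b : forall j : nat, W (p + r.+1%:Z - 1 - j%:Z) (q + r.+1%:Z - 2 - j%:Z))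
         (e : W p (q - 1))
         (c : forall j : nat, W (p - 1 - j%:Z) (q - 1 - j%:Z))
         (i : mhom Z W),
    IsZW r.+1 p q a -> IsBW r.+1 p q b e c -> iota_spec r.+1 p q a b e c i -> rlp i f.

Definition Jinj (n : option nat) (r : nat) (A B : mcx n) (f : mhom A B) : Prop :=
  forall (p q : int) (Z : mcx n) (a : forall j : nat, Z (p - j%:Z) (q - j%:Z)),
    IsZW r p q a -> rlp (zero_hom Z) f.

End Multicomplexes.
Arguments mhom {R n} A B.

(* Main.v *)
Require Import Defs.
From HB Require Import structures.
From mathcomp Require Import all_boot all_order all_algebra.
From mathcomp Require Import boolp.
Set Implicit Arguments.
Unset Strict Implicit.
Unset Printing Implicit Defensive.
Import GRing.Theory.
From mathcomp Require Import zify.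
Local Open Scope ring_scope.
Arguments dd {R n} m i {p q p' q'} x.
Arguments hf {R n A B} m {p q} x.
Arguments dd_lin {R n} m i p q p' q'.
Arguments dd_deg {R n} m i p q p' q' x.
Arguments dd_rel {R n} m l p q p' q' x.
Arguments hf_lin {R n A B} m p q.
Arguments hf_comm {R n A B} m i p q p' q' x.

Section Lin.
Variable R : comPzRingType.
Section L.
Variables (U V : lmodType R) (f : U -> V) (fl : is_lin f).
Lemma lin0' : f 0 = 0. Proof. exact: lin0. Qed.
Lemma linD u v : f (u + v) = f u + f v. Proof. by have := fl 1 u v; rewrite !scale1r. Qed.
Lemma linZ a u : f (a *: u) = a *: f u. Proof. by have := fl a u 0; rewrite lin0' !addr0. Qed.
Lemma linN u : f (- u) = - f u. Proof. by rewrite -scaleN1r linZ scaleN1r. Qed.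
Lemma linB u v : f (u - v) = f u - f v. Proof. by rewrite linD linN. Qed.
Lemma lin_sum I (r : seq I) (P : pred I) (F : I -> U) :
  f (\sum_(i <- r | P i) F i) = \sum_(i <- r | P i) f (F i).
Proof. exact: (big_morph f linD lin0'). Qed.
End L.

Section Tr.
Variable A : int -> int -> lmodType R.
Lemma tr_id p q (x : A p q) : tr p q x = x.
Proof.
rewrite /tr; case: (p =P p) => [e1|//]; case: (q =P q) => [e2|//].
by rewrite (eq_irrelevance e1 erefl) (eq_irrelevance e2 erefl).
Qed.
Lemma tr_ne p q p' q' (x : A p q) : ~ (p = p' /\ q = q') -> tr p' q' x = 0.
Proof.
move=> h; rewrite /tr; case: (p =P p') => [e1|//]; case: (q =P q') => [e2|//].
by case: h.
Qed.
Lemma tr_lin p q p' q' : is_lin (@tr R A p q p' q').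
Proof.
move=> a u v.
have [[e1 e2]|ne] := lem (p = p' /\ q = q'); last by rewrite !tr_ne // scaler0 addr0.
by subst; rewrite !tr_id.
Qed.
End Tr.
Lemma tr_map (A B : int -> int -> lmodType R) (F : forall p q, A p q -> B p q)
  (F0 : forall p q, F p q 0 = 0) p q p' q' (x : A p q) :
  F p' q' (tr p' q' x) = tr p' q' (F p q x).
Proof.
have [[e1 e2]|ne] := lem (p = p' /\ q = q'); last by rewrite !tr_ne // F0.
by subst; rewrite !tr_id.
Qed.
End Lin.

Definition tot (R : comPzRingType) (n : option nat) (A : mcx R n) := forall p q : int, A p q.
HB.instance Definition _ R n A := gen_eqMixin (@tot R n A).
HB.instance Definition _ R n A := gen_choiceMixin (@tot R n A).
Section Tot.
Variables (R : comPzRingType) (n : option nat) (A : mcx R n).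
Local Notation T := (tot A).
Definition tadd (x y : T) : T := fun p q => x p q + y p q.
Definition topp (x : T) : T := fun p q => - x p q.
Definition tzero : T := fun p q => 0.
Definition tscale (a : R) (x : T) : T := fun p q => a *: x p q.
Lemma fext (x y : T) : (forall p q, x p q = y p q) -> x = y.
Proof. move=> h; apply: functional_extensionality_dep => p; apply: functional_extensionality_dep => q; exact: h. Qed.
Lemma taddA : associative tadd. Proof. by move=> x y z; apply: fext => p q; rewrite /tadd addrA. Qed.
Lemma taddC : commutative tadd. Proof. by move=> x y; apply: fext => p q; rewrite /tadd addrC. Qed.
Lemma tadd0 : left_id tzero tadd. Proof. by move=> x; apply: fext => p q; rewrite /tadd add0r. Qed.
Lemma taddN : left_inverse tzero topp tadd. Proof. by move=> x; apply: fext => p q; rewrite /tadd /topp addNr. Qed.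
End Tot.
HB.instance Definition _ (R : comPzRingType) n A := GRing.isZmodule.Build (@tot R n A) (@taddA R n A) (@taddC R n A) (@tadd0 R n A) (@taddN R n A).
Section Tot2.
Variables (R : comPzRingType) (n : option nat) (A : mcx R n).
Local Notation T := (tot A).
Lemma tscaleA a b (v : T) : tscale a (tscale b v) = tscale (a * b) v.
Proof. by apply: fext => p q; rewrite /tscale scalerA. Qed.
Lemma tscale1 : left_id 1 (@tscale R n A). Proof. by move=> x; apply: fext => p q; rewrite /tscale scale1r. Qed.
Lemma tscaleDr : right_distributive (@tscale R n A) +%R.
Proof. by move=> a x y; apply: fext => p q; rewrite /tscale /= /tadd scalerDr. Qed.
Lemma tscaleDl (v : T) : {morph (@tscale R n A)^~ v: a b / a + b}.
Proof. by move=> a b; apply: fext => p q; rewrite /tscale /= /tadd scalerDl. Qed.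
End Tot2.
HB.instance Definition _ (R : comPzRingType) n A := GRing.Zmodule_isLmodule.Build R (@tot R n A) (@tscaleA R n A) (@tscale1 R n A) (@tscaleDr R n A) (@tscaleDl R n A).

Section Mcx.
Variables (R : comPzRingType) (n : option nat).
Implicit Types (A B C : mcx R n).

Lemma evD A (x y : tot A) p q : (x + y) p q = x p q + y p q. Proof. by []. Qed.
Lemma evZ A a (x : tot A) p q : (a *: x) p q = a *: x p q. Proof. by []. Qed.
Lemma evN A (x : tot A) p q : (- x) p q = - x p q. Proof. by []. Qed.
Lemma evB A (x y : tot A) p q : (x - y) p q = x p q - y p q. Proof. by []. Qed.
Lemma ev0 A p q : (0 : tot A) p q = 0. Proof. by []. Qed.
Lemma evsum A I (r : seq I) (P : pred I) (F : I -> tot A) p q :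
  (\sum_(i <- r | P i) F i) p q = \sum_(i <- r | P i) F i p q.
Proof. by elim/big_rec2: _ => // i y1 y2 _ <-. Qed.

Section DD.
Variables (A : mcx R n) (i : nat) (p q p' q' : int).
Lemma ddD (u v : A p q) : dd A i (p' := p') (q' := q') (u + v) = dd A i u + dd A i v.
Proof. exact: (linD (dd_lin A i p q p' q') u v). Qed.
Lemma ddZ a (u : A p q) : dd A i (p' := p') (q' := q') (a *: u) = a *: dd A i u.
Proof. exact: (linZ (dd_lin A i p q p' q') a u). Qed.
Lemma dd0 : dd A i (p := p) (q := q) (p' := p') (q' := q') 0 = 0.
Proof. exact: (lin0' (dd_lin A i p q p' q')). Qed.
Lemma ddN (u : A p q) : dd A i (p' := p') (q' := q') (- u) = - dd A i u.
Proof. exact: (linN (dd_lin A i p q p' q') u). Qed.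
Lemma ddB (u v : A p q) : dd A i (p' := p') (q' := q') (u - v) = dd A i u - dd A i v.
Proof. exact: (linB (dd_lin A i p q p' q') u v). Qed.
Lemma dd_sum I (r : seq I) (P : pred I) (F : I -> A p q) :
  dd A i (p' := p') (q' := q') (\sum_(k <- r | P k) F k) = \sum_(k <- r | P k) dd A i (F k).
Proof. exact: (lin_sum (dd_lin A i p q p' q') r P F). Qed.
Lemma dd_deg' (x : A p q) : ~ (p' = p - i%:Z /\ q' = q + 1 - i%:Z) -> dd A i (p' := p') (q' := q') x = 0.
Proof. by move=> h; apply: dd_deg; lia. Qed.
End DD.

Section HF.
Variables (A B : mcx R n) (f : mhom A B) (p q : int).
Lemma hfD (u v : A p q) : hf f (u + v) = hf f u + hf f v.
Proof. exact: (linD (hf_lin f p q) u v). Qed.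
Lemma hfZ a (u : A p q) : hf f (a *: u) = a *: hf f u.
Proof. exact: (linZ (hf_lin f p q) a u). Qed.
Lemma hf0 : hf f (0 : A p q) = 0.
Proof. exact: (lin0' (hf_lin f p q)). Qed.
Lemma hfN (u : A p q) : hf f (- u) = - hf f u.
Proof. exact: (linN (hf_lin f p q) u). Qed.
Lemma hfB (u v : A p q) : hf f (u - v) = hf f u - hf f v.
Proof. exact: (linB (hf_lin f p q) u v). Qed.
Lemma hf_sum I (r : seq I) (P : pred I) (F : I -> A p q) :
  hf f (\sum_(k <- r | P k) F k) = \sum_(k <- r | P k) hf f (F k).
Proof. exact: (lin_sum (hf_lin f p q) r P F). Qed.
End HF.

Definition Dop A (i : nat) (y : tot A) : tot A :=
  fun p q => dd A i (y (p + i%:Z) (q + i%:Z - 1)).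
Definition delta A p q (x : A p q) : tot A := fun p' q' => tr p' q' x.
Definition supp A (P Q : int) (y : tot A) := forall p q, ~ (p = P /\ q = Q) -> y p q = 0.
Definition Fh A B (f : mhom A B) (y : tot A) : tot B := fun p q => hf f (y p q).

Lemma DopD A i (x y : tot A) : Dop i (x + y) = Dop i x + Dop i y.
Proof. by apply: fext => p q; rewrite /Dop /= /tadd ddD. Qed.
Lemma DopZ A i a (x : tot A) : Dop i (a *: x) = a *: Dop i x.
Proof. by apply: fext => p q; rewrite /Dop /= /tscale ddZ. Qed.
Lemma Dop0 A i : Dop i (0 : tot A) = 0.
Proof. by apply: fext => p q; rewrite /Dop /= /tzero dd0. Qed.
Lemma DopN A i (x : tot A) : Dop i (- x) = - Dop i x.
Proof. by apply: fext => p q; rewrite /Dop /= /topp ddN. Qed.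
Lemma DopB A i (x y : tot A) : Dop i (x - y) = Dop i x - Dop i y.
Proof. by rewrite DopD DopN. Qed.
Lemma Dop_sum A i I (r : seq I) (P : pred I) (F : I -> tot A) :
  Dop i (\sum_(k <- r | P k) F k) = \sum_(k <- r | P k) Dop i (F k).
Proof. exact: (big_morph (Dop i) (DopD i) (Dop0 _ i)). Qed.

Lemma FhD A B (f : mhom A B) (x y : tot A) : Fh f (x + y) = Fh f x + Fh f y.
Proof. by apply: fext => p q; rewrite /Fh /= /tadd hfD. Qed.
Lemma FhZ A B (f : mhom A B) a (x : tot A) : Fh f (a *: x) = a *: Fh f x.
Proof. by apply: fext => p q; rewrite /Fh /= /tscale hfZ. Qed.
Lemma Fh0 A B (f : mhom A B) : Fh f (0 : tot A) = 0.
Proof. by apply: fext => p q; rewrite /Fh /= /tzero hf0. Qed.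
Lemma FhN A B (f : mhom A B) (x : tot A) : Fh f (- x) = - Fh f x.
Proof. by apply: fext => p q; rewrite /Fh /= /topp hfN. Qed.
Lemma FhB A B (f : mhom A B) (x y : tot A) : Fh f (x - y) = Fh f x - Fh f y.
Proof. by rewrite FhD FhN. Qed.
Lemma Fh_sum A B (f : mhom A B) I (r : seq I) (P : pred I) (F : I -> tot A) :
  Fh f (\sum_(k <- r | P k) F k) = \sum_(k <- r | P k) Fh f (F k).
Proof. exact: (big_morph (Fh f) (FhD f) (Fh0 f)). Qed.
Lemma Fh_Dop A B (f : mhom A B) i (y : tot A) : Fh f (Dop i y) = Dop i (Fh f y).
Proof. by apply: fext => p q; rewrite /Fh /Dop hf_comm. Qed.

Lemma deltaE A p q (x : A p q) : delta x p q = x.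
Proof. exact: tr_id. Qed.
Lemma delta_inj A p q (x y : A p q) : delta x = delta y -> x = y.
Proof. by move=> e; rewrite -(deltaE x) -(deltaE y) e. Qed.
Lemma deltaD A p q (x y : A p q) : delta (x + y) = delta x + delta y.
Proof. by apply: fext => p' q'; rewrite /delta /= /tadd (linD (@tr_lin _ A p q p' q') x y). Qed.
Lemma deltaZ A p q a (x : A p q) : delta (a *: x) = a *: delta x.
Proof. by apply: fext => p' q'; rewrite /delta /= /tscale (linZ (@tr_lin _ A p q p' q') a x). Qed.
Lemma delta0 A p q : delta (0 : A p q) = 0.
Proof. by apply: fext => p' q'; rewrite /delta /= /tzero (lin0' (@tr_lin _ A p q p' q')). Qed.
Lemma deltaN A p q (x : A p q) : delta (- x) = - delta x.
Proof. by rewrite -scaleN1r deltaZ scaleN1r. Qed.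
Lemma deltaB A p q (x y : A p q) : delta (x - y) = delta x - delta y.
Proof. by rewrite deltaD deltaN. Qed.
Lemma delta_sum A p q I (r : seq I) (P : pred I) (F : I -> A p q) :
  delta (\sum_(k <- r | P k) F k) = \sum_(k <- r | P k) delta (F k).
Proof. exact: (big_morph (@delta A p q) (@deltaD A p q) (delta0 A p q)). Qed.
Lemma delta_tr A p q p' q' (x : A p q) : p = p' -> q = q' -> delta (tr p' q' x) = delta x.
Proof. by move=> e1 e2; subst; rewrite tr_id. Qed.
Lemma delta_supp A p q (x : A p q) : supp p q (delta x).
Proof. by move=> p' q' h; rewrite /delta tr_ne //; case=> e1 e2; apply: h. Qed.
Lemma supp_delta A P Q (y : tot A) : supp P Q y -> y = delta (y P Q).
Proof.
move=> h; apply: fext => p q.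
have [[-> ->]|ne] := lem (p = P /\ q = Q); first by rewrite deltaE.
by rewrite h // /delta tr_ne //; case=> e1 e2; apply: ne.
Qed.
Lemma Fh_delta A B (f : mhom A B) p q (x : A p q) : Fh f (delta x) = delta (hf f x).
Proof.
apply: fext => p' q'; rewrite /Fh /delta.
exact: (@tr_map R A B (fun p q => hf f (p := p) (q := q)) (fun p q => hf0 f p q)).
Qed.

Lemma dd_tr A i p q P Q X Y (x : A p q) : p = P -> q = Q ->
  dd A i (p' := X) (q' := Y) (tr P Q x) = dd A i x.
Proof. by move=> e1 e2; subst; rewrite tr_id. Qed.

Lemma Dop_delta A i p q (x : A p q) :
  Dop i (delta x) = fun p' q' => dd A i (p' := p') (q' := q') x.
Proof.
apply: fext => p' q'; rewrite /Dop /delta.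
have [[e1 e2]|ne] := lem (p = p' + i%:Z /\ q = q' + i%:Z - 1).
  by rewrite dd_tr.
by rewrite tr_ne // dd0 dd_deg' //; lia.
Qed.

Lemma delta_dd A i p q X Y (x : A p q) : X = p - i%:Z -> Y = q + 1 - i%:Z ->
  delta (dd A i (p' := X) (q' := Y) x) = Dop i (delta x).
Proof.
move=> e1 e2; rewrite Dop_delta; apply: fext => p' q'; rewrite /delta.
have [[f1 f2]|ne] := lem (X = p' /\ Y = q'); first by subst; rewrite tr_id.
by rewrite tr_ne // dd_deg' //; lia.
Qed.

Lemma Dop_supp A i P Q (y : tot A) : supp P Q y -> supp (P - i%:Z) (Q + 1 - i%:Z) (Dop i y).
Proof.
move=> /supp_delta ->; rewrite Dop_delta => p' q' h.
by apply: dd_deg'.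
Qed.

Lemma supp0 A P Q : supp P Q (0 : tot A). Proof. by []. Qed.
Lemma suppD A P Q (x y : tot A) : supp P Q x -> supp P Q y -> supp P Q (x + y).
Proof. by move=> h1 h2 p q h; rewrite evD h1 // h2 // addr0. Qed.
Lemma suppZ A P Q a (x : tot A) : supp P Q x -> supp P Q (a *: x).
Proof. by move=> h1 p q h; rewrite evZ h1 // scaler0. Qed.
Lemma suppN A P Q (x : tot A) : supp P Q x -> supp P Q (- x).
Proof. by move=> h1 p q h; rewrite evN h1 // oppr0. Qed.
Lemma suppB A P Q (x y : tot A) : supp P Q x -> supp P Q y -> supp P Q (x - y).
Proof. by move=> h1 h2; apply: suppD => //; apply: suppN. Qed.
Lemma supp_sum A P Q I (r : seq I) (Pr : pred I) (F : I -> tot A) :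
  (forall k, Pr k -> supp P Q (F k)) -> supp P Q (\sum_(k <- r | Pr k) F k).
Proof. by move=> h; elim/big_rec: _ => // k y Pk hy; apply: suppD => //; apply: h. Qed.
Lemma supp_eq A P Q P' Q' (y : tot A) : P = P' -> Q = Q' -> supp P Q y -> supp P' Q' y.
Proof. by move=> -> ->. Qed.
Lemma Fh_supp A B (f : mhom A B) P Q (y : tot A) : supp P Q y -> supp P Q (Fh f y).
Proof. by move=> h p q h'; rewrite /Fh h // hf0. Qed.

Lemma comp_cong A (y : tot A) i k X Y P1 Q1 M1 N1 P2 Q2 M2 N2 :
  P1 = P2 -> Q1 = Q2 -> M1 = M2 -> N1 = N2 ->
  dd A i (p' := X) (q' := Y) (dd A k (p' := M1) (q' := N1) (y P1 Q1)) =
  dd A i (p' := X) (q' := Y) (dd A k (p' := M2) (q' := N2) (y P2 Q2)).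
Proof. by move=> -> -> -> ->. Qed.

Lemma rhoT A N (y : tot A) :
  \sum_(a < N.+1) (-1) ^+ a *: Dop a (Dop (N - a) y) = 0.
Proof.
apply: fext => p q; rewrite evsum ev0.
rewrite -[RHS](dd_rel A N (p + N%:Z) (q + N%:Z - 2) p q (y (p + N%:Z) (q + N%:Z - 2))).
apply: eq_bigr => a _; rewrite evZ /Dop; congr (_ *: _).
have := ltn_ord a; move: (nat_of_ord a) => b hb.
apply: comp_cong; lia.
Qed.

End Mcx.


Lemma sgnE (R : pzRingType) (x y c : nat) : x = (y + c + c)%N -> (-1) ^+ x = (-1) ^+ y :> R.
Proof. by move->; rewrite -addnA addnn -muln2 exprD exprM sqrr_sign mulr1. Qed.

Lemma tri (V : zmodType) (F : nat -> nat -> V) n :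
  \sum_(0 <= m < n) \sum_(0 <= b < n - m) F m b =
  \sum_(0 <= t < n) \sum_(0 <= m < t.+1) F m (t - m)%N.
Proof.
elim: n => [|n IH]; first by rewrite !big_geq.
rewrite big_nat_recr //= [RHS]big_nat_recr //= -IH.
rewrite [X in _ = _ + X]big_nat_recr //= subnn.
have -> : \sum_(0 <= m < n) \sum_(0 <= b < n.+1 - m) F m b =
          \sum_(0 <= m < n) (\sum_(0 <= b < n - m) F m b + F m (n - m)%N).
  apply: eq_big_nat => m /andP [_ hm]; rewrite subSn ?(ltnW hm) //.
  by rewrite big_nat_recr.
by rewrite big_split /= subSnn big_nat1 -!addrA.
Qed.

Section Alg.
Variables (R : comPzRingType) (n : option nat) (A : mcx R n).
Implicit Types (al b g : nat -> tot A).

Definition Delta al l : tot A := \sum_(j < l.+1) (-1) ^+ (l - j) *: Dop (l - j) (al j).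
Definition chainT k P Q al :=
  (forall j, supp (P - j%:Z) (Q - j%:Z) (al j)) /\ (forall l, (l < k)%N -> Delta al l = 0).
Definition shiftup g (j : nat) : tot A := if j is j'.+1 then g j' else 0.
Definition Sfam s b (j : nat) : tot A :=
  (-1) ^+ j *: \sum_(j.+1 <= k < s + j) (-1) ^+ k *: Dop k (b (s + j - 1 - k)%N).
Definition Psi s b (j : nat) : tot A := Dop j (b s.-1) + Sfam s b j.
Definition Phi s b g (j : nat) : tot A := Psi s b j + shiftup g j.

Lemma DeltaN al l : Delta al l = \sum_(0 <= j < l.+1) (-1) ^+ (l - j) *: Dop (l - j) (al j).
Proof. by rewrite /Delta big_mkord. Qed.

Lemma Delta_eq al al' l : (forall j, (j <= l)%N -> al j = al' j) -> Delta al l = Delta al' l.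
Proof. by move=> h; rewrite !DeltaN; apply: eq_big_nat => j /andP [_ hj]; rewrite h. Qed.

Lemma DeltaD al al' l : Delta (fun j => al j + al' j) l = Delta al l + Delta al' l.
Proof. by rewrite /Delta -big_split; apply: eq_bigr => j _; rewrite DopD scalerDr. Qed.
Lemma DeltaZ a al l : Delta (fun j => a *: al j) l = a *: Delta al l.
Proof. by rewrite /Delta scaler_sumr; apply: eq_bigr => j _; rewrite DopZ !scalerA mulrC. Qed.
Lemma DeltaNeg al l : Delta (fun j => - al j) l = - Delta al l.
Proof. by rewrite -scaleN1r -DeltaZ; apply: Delta_eq => j _; rewrite scaleN1r. Qed.
Lemma DeltaB al al' l : Delta (fun j => al j - al' j) l = Delta al l - Delta al' l.
Proof. by rewrite DeltaD DeltaNeg. Qed.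
Lemma Delta0 l : Delta (fun _ => 0) l = 0.
Proof. by rewrite /Delta big1 // => j _; rewrite Dop0 scaler0. Qed.

Lemma Delta_shift0 g : Delta (shiftup g) 0 = 0.
Proof. by rewrite /Delta big_ord1 /= Dop0 scaler0. Qed.
Lemma Delta_shift g l : Delta (shiftup g) l.+1 = Delta g l.
Proof. by rewrite /Delta big_ord_recl /= Dop0 scaler0 add0r; apply: eq_bigr => j _; rewrite subSS. Qed.

Lemma Glem c l (y : tot A) :
  \sum_(0 <= j < l.+1) (-1) ^+ (l - j) *: Dop (l - j) (Dop (c + j) y) =
  - \sum_(0 <= b < c) (-1) ^+ (l + c - b) *: Dop (l + c - b) (Dop b y).
Proof.
have h : \sum_(0 <= a < (l + c).+1) (-1) ^+ a *: Dop a (Dop (l + c - a) y) = 0.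
  by rewrite big_mkord; exact: rhoT.
rewrite (big_cat_nat _ (n := l.+1)) //= in h; last by lia.
apply/eqP; rewrite -addr_eq0; apply/eqP; rewrite -[RHS]h; congr (_ + _).
  rewrite big_nat_rev /=; apply: eq_big_nat => j /andP [_ hj].
  rewrite add0n subSS (_ : (l - (l - j) = j)%N); last by lia.
  by rewrite (_ : (c + (l - j) = l + c - j)%N) //; lia.
rewrite (_ : l.+1 = 0 + l.+1)%N // big_addn (_ : ((l + c).+1 - (0 + l.+1) = c)%N); last by lia.
rewrite [RHS]big_nat_rev /=; apply: eq_big_nat => b /andP [_ hb].
rewrite add0n (_ : (c - b.+1 + l.+1 = l + c - b)%N); last by lia.
by rewrite (_ : (l + c - (l + c - b) = b)%N) //; lia.
Qed.

Lemma Delta_const (y : tot A) l : Delta (fun j => Dop j y) l = 0.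
Proof. by rewrite DeltaN (Glem 0 l y) big_geq // oppr0. Qed.

Lemma Sfam_alt s b j : Sfam s b j =
  \sum_(0 <= m < s.-1) (-1) ^+ (s.-1 - m) *: Dop (s.-1 - m + j) (b m).
Proof.
rewrite /Sfam scaler_sumr -{1}[j.+1]add0n big_addn (_ : (s + j - j.+1 = s.-1)%N); last by lia.
rewrite big_nat_rev /=; apply: eq_big_nat => m /andP [_ hm].
rewrite add0n scalerA -exprD.
rewrite (_ : (s.-1 - m.+1 + j.+1 = s.-1 - m + j)%N); last by lia.
rewrite (_ : (s + j - 1 - (s.-1 - m + j) = m)%N); last by lia.
by rewrite (@sgnE _ _ (s.-1 - m) j) //; lia.
Qed.

Lemma Delta_Sfam s b l : (forall t, (t < s.-1)%N -> Delta b t = 0) -> Delta (Sfam s b) l = 0.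
Proof.
move=> hb; set N := s.-1.
have e1 : Delta (Sfam s b) l =
  \sum_(0 <= m < N) (-1) ^+ (N - m) *:
     \sum_(0 <= j < l.+1) (-1) ^+ (l - j) *: Dop (l - j) (Dop ((N - m) + j) (b m)).
  rewrite DeltaN.
  under eq_bigr => j _ do rewrite Sfam_alt Dop_sum scaler_sumr.
  rewrite exchange_big /=; apply: eq_bigr => m _; rewrite scaler_sumr.
  by apply: eq_bigr => j _; rewrite DopZ !scalerA mulrC.
rewrite e1.
under eq_bigr => m _ do rewrite Glem scalerN scaler_sumr.
rewrite sumrN.
rewrite (tri (fun (m k : nat) => (-1) ^+ (N - m) *: ((-1) ^+ (l + (N - m) - k) *:
                Dop (l + (N - m) - k) (Dop k (b m)))) N).
rewrite big_nat_cond big1 ?oppr0 // => t /andP [/andP [_ ht] _].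
have -> : \sum_(0 <= m < t.+1) (-1) ^+ (N - m) *: ((-1) ^+ (l + (N - m) - (t - m)) *:
                Dop (l + (N - m) - (t - m)) (Dop (t - m) (b m))) =
          (-1) ^+ l *: Dop (l + N - t) (Delta b t).
  rewrite DeltaN Dop_sum scaler_sumr; apply: eq_big_nat => m /andP [_ hm].
  rewrite DopZ !scalerA -!exprD (_ : (l + (N - m) - (t - m) = l + N - t)%N); last by lia.
  by rewrite (@sgnE _ _ (l + (t - m)) (N - t)) //; lia.
by rewrite hb // Dop0 scaler0.
Qed.

Lemma Delta_Psi s b l : (forall t, (t < s.-1)%N -> Delta b t = 0) -> Delta (Psi s b) l = 0.
Proof.
move=> hb; rewrite /Psi (DeltaD (fun j => Dop j (b s.-1)) (Sfam s b)).
by rewrite Delta_const Delta_Sfam // addr0.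
Qed.

Lemma Psi0 r b : Psi r.+1 b 0 = Delta b r.
Proof.
rewrite /Psi Sfam_alt DeltaN big_nat_recr //= subnn addrC; congr (_ + _).
  by rewrite expr0 scale1r.
by apply: eq_big_nat => m _; rewrite addn0.
Qed.
End Alg.


Section Chain.
Variables (R : comPzRingType) (n : option nat).
Implicit Types (A B : mcx R n).

Lemma Delta_rev A (al : nat -> tot A) l :
  Delta al l = \sum_(i < l.+1) (-1) ^+ i *: Dop i (al (l - i)%N).
Proof.
rewrite DeltaN big_nat_rev -(big_mkord xpredT (fun i => (-1) ^+ i *: Dop i (al (l - i)%N))).
apply: eq_big_nat => j /andP [_ hj].
by rewrite add0n subSS (_ : (l - (l - j) = j)%N) //; lia.
Qed.

Lemma Fh_Delta A B (f : mhom A B) al l : Fh f (Delta al l) = Delta (fun j => Fh f (al j)) l.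
Proof. by rewrite /Delta Fh_sum; apply: eq_bigr => j _; rewrite FhZ Fh_Dop. Qed.

Lemma Fh_Psi A B (f : mhom A B) s b j : Fh f (Psi s b j) = Psi s (fun m => Fh f (b m)) j.
Proof.
rewrite /Psi /Sfam FhD Fh_Dop FhZ Fh_sum; congr (_ + _ *: _).
by apply: eq_bigr => k _; rewrite FhZ Fh_Dop.
Qed.

Lemma Psi_eq A r (b b' : nat -> tot A) j : (forall m, (m < r.+1)%N -> b m = b' m) ->
  Psi r.+1 b j = Psi r.+1 b' j.
Proof.
move=> h; rewrite /Psi /Sfam /= h //; congr (_ + _ *: _).
by apply: eq_big_nat => k /andP [h1 h2]; rewrite h //; lia.
Qed.

Lemma Psi_supp A r (b : nat -> tot A) p q j :
  (forall m, (m < r.+1)%N -> supp (p + r.+1%:Z - 1 - m%:Z) (q + r.+1%:Z - 2 - m%:Z) (b m)) ->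
  supp (p - j%:Z) (q - j%:Z) (Psi r.+1 b j).
Proof.
move=> h; rewrite /Psi /=; apply: suppD.
  apply: (supp_eq _ _ (Dop_supp (h r (ltnSn r)))); lia.
rewrite /Sfam; apply: suppZ; rewrite big_nat_cond; apply: supp_sum => k /andP [/andP [h1 h2] _].
apply: suppZ; apply: (supp_eq _ _ (Dop_supp (h _ _))); lia.
Qed.

Lemma Phi_supp A r (b g : nat -> tot A) p q j :
  (forall m, (m < r.+1)%N -> supp (p + r.+1%:Z - 1 - m%:Z) (q + r.+1%:Z - 2 - m%:Z) (b m)) ->
  (forall m, supp (p - 1 - m%:Z) (q - 1 - m%:Z) (g m)) ->
  supp (p - j%:Z) (q - j%:Z) (Phi r.+1 b g j).
Proof.
move=> hb hg; apply: suppD; first exact: Psi_supp.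
by case: j => [|j] //=; apply: (supp_eq _ _ (hg j)); lia.
Qed.

Lemma chain_eq A k P Q P' Q' (al : nat -> tot A) : P = P' -> Q = Q' ->
  chainT k P Q al -> chainT k P' Q' al.
Proof. by move=> -> ->. Qed.
Lemma chainD A k P Q (al be : nat -> tot A) : chainT k P Q al -> chainT k P Q be ->
  chainT k P Q (fun j => al j + be j).
Proof.
move=> [s1 d1] [s2 d2]; split=> [j|l hl]; first exact: suppD.
by rewrite DeltaD d1 ?d2 ?addr0.
Qed.
Lemma chainN A k P Q (al : nat -> tot A) : chainT k P Q al -> chainT k P Q (fun j => - al j).
Proof.
move=> [s1 d1]; split=> [j|l hl]; first exact: suppN.
by rewrite DeltaNeg d1 ?oppr0.
Qed.
Lemma chainB A k P Q (al be : nat -> tot A) : chainT k P Q al -> chainT k P Q be ->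
  chainT k P Q (fun j => al j - be j).
Proof. by move=> h1 h2; apply: chainD h1 (chainN h2). Qed.
Lemma chain0 A k P Q : chainT k P Q (fun _ => 0 : tot A).
Proof. by split=> [j|l _]; [exact: supp0 | exact: Delta0]. Qed.
Lemma chain_weak A k k' P Q (al : nat -> tot A) : (k' <= k)%N -> chainT k P Q al -> chainT k' P Q al.
Proof. by move=> hk [s1 d1]; split=> // l hl; apply: d1; apply: leq_trans hl hk. Qed.
Lemma chain_trunc A k P Q (al be : nat -> tot A) : chainT k P Q al ->
  (forall j, supp (P - j%:Z) (Q - j%:Z) (be j)) -> (forall j, (j < k)%N -> al j = be j) ->
  chainT k P Q be.
Proof.
move=> [s1 d1] s2 h; split=> // l hl; rewrite -(d1 l hl); apply: Delta_eq => j hj.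
by rewrite h //; apply: leq_ltn_trans hj hl.
Qed.
Lemma Fh_chain A B (f : mhom A B) k P Q (al : nat -> tot A) : chainT k P Q al ->
  chainT k P Q (fun j => Fh f (al j)).
Proof.
move=> [s1 d1]; split=> [j|l hl]; first exact: Fh_supp.
by rewrite -Fh_Delta d1 // Fh0.
Qed.
Lemma chain_shiftup A k P Q (g : nat -> tot A) : chainT k (P - 1) (Q - 1) g ->
  chainT k.+1 P Q (shiftup g).
Proof.
move=> [s1 d1]; split=> [[|j]|[|l] hl] /=.
- exact: supp0.
- by apply: (supp_eq _ _ (s1 j)); lia.
- exact: Delta_shift0.
- by rewrite Delta_shift d1.
Qed.
Lemma shiftup_down A (al : nat -> tot A) : al 0%N = 0 -> al = shiftup (fun j => al j.+1).
Proof. by move=> h; apply: funext => -[|j]. Qed.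
Lemma chain_shiftdown A k P Q (al : nat -> tot A) : chainT k.+1 P Q al -> al 0%N = 0 ->
  chainT k (P - 1) (Q - 1) (fun j => al j.+1).
Proof.
move=> [s1 d1] h0; split=> [j|l hl].
  by apply: (supp_eq _ _ (s1 j.+1)); lia.
by rewrite -Delta_shift -shiftup_down // d1.
Qed.
Lemma chain_const A k P Q (y : tot A) : supp P (Q - 1) y -> chainT k P Q (fun j => Dop j y).
Proof.
move=> h; split=> [j|l _]; last exact: Delta_const.
by apply: (supp_eq _ _ (Dop_supp h)); lia.
Qed.
Lemma chain_Psi A k r p q (b : nat -> tot A) :
  (forall m, (m < r.+1)%N -> supp (p + r.+1%:Z - 1 - m%:Z) (q + r.+1%:Z - 2 - m%:Z) (b m)) ->
  (forall t, (t < r)%N -> Delta b t = 0) -> chainT k p q (Psi r.+1 b).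
Proof.
move=> hs hd; split=> [j|l _]; first exact: Psi_supp.
exact: Delta_Psi.
Qed.

Lemma Delta_deltaE A P Q (a : forall j : nat, A (P - j%:Z) (Q - j%:Z)) l :
  Delta (fun j => delta (a j)) l =
  fun p' q' => \sum_(j < l.+1) (-1) ^+ (l - j) *: dd A (l - j) (p' := p') (q' := q') (a j).
Proof.
apply: fext => p' q'; rewrite /Delta evsum; apply: eq_bigr => j _.
by rewrite evZ Dop_delta.
Qed.

Lemma zrel_Delta A P Q (a : forall j : nat, A (P - j%:Z) (Q - j%:Z)) l :
  zrel a l <-> Delta (fun j => delta (a j)) l = 0.
Proof.
rewrite Delta_deltaE; split.
  move=> h; apply: fext => p' q'; rewrite ev0.
  have [[e1 e2]|ne] := lem (p' = P - l%:Z /\ q' = Q - l%:Z + 1); first by subst.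
  rewrite big1 // => j _; rewrite dd_deg' ?scaler0 //; have := ltn_ord j; lia.
by move/(congr1 (fun F => F (P - l%:Z) (Q - l%:Z + 1))).
Qed.

Lemma ZrT A r p q (z : A p q) :
  Zr r.+1 z <-> exists al, chainT r.+1 p q al /\ al 0%N = delta z.
Proof.
split.
  case=> a [h1 h2]; exists (fun j => delta (a j)); split; last first.
    by rewrite -h1 delta_tr //; lia.
  split=> [j|l hl]; first exact: delta_supp.
  by apply/zrel_Delta; apply: h2.
case=> al [[s1 d1] h0].
have ea : forall j, delta (al j (p - j%:Z) (q - j%:Z)) = al j.
  by move=> j; rewrite -supp_delta.
exists (fun j => al j (p - j%:Z) (q - j%:Z)); split.
  by apply: delta_inj; rewrite delta_tr ?ea // ?h0 //; lia.
move=> l hl; apply/zrel_Delta; rewrite -(d1 l hl); apply: Delta_eq => j _; exact: ea.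
Qed.

Lemma targ_Delta A P Q (bb : forall j : nat, A (P - j%:Z) (Q - j%:Z)) l X Y :
  X = P - l%:Z -> Y = Q - l%:Z + 1 ->
  (\sum_(i < l.+1) (-1) ^+ i *: dd A i (p' := X) (q' := Y) (bb (l - i)%N) = 0 <->
   Delta (fun j => delta (bb j)) l = 0).
Proof.
move=> eX eY; rewrite Delta_rev; split.
  move=> h; apply: fext => p' q'; rewrite ev0 evsum.
  have [[e1 e2]|ne] := lem (p' = X /\ q' = Y).
    by subst p' q'; rewrite -[RHS]h; apply: eq_bigr => i _; rewrite evZ Dop_delta.
  rewrite big1 // => i _; rewrite evZ Dop_delta dd_deg' ?scaler0 //; have := ltn_ord i; lia.
move/(congr1 (fun F => F X Y)); rewrite evsum ev0 => h; rewrite -[RHS]h; apply: eq_bigr => i _.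
by rewrite evZ Dop_delta.
Qed.

Lemma BrT A r p q (z : A p q) :
  Br r.+1 z <-> exists b, chainT r (p + r.+1%:Z - 1) (q + r.+1%:Z - 2) b /\ delta z = Delta b r.
Proof.
case: r => [|r].
  split.
    case=> b0 ->; exists (fun j => if j == 0%N then delta b0 else 0); split.
      split=> [[|j]|l //]; last exact: supp0.
      by apply: (supp_eq _ _ (delta_supp b0)); lia.
    rewrite /Delta big_ord1 /= expr0 scale1r delta_dd //; lia.
  case=> b [[s1 _] hz]; exists (b 0%N p (q - 1)); apply: delta_inj.
  rewrite hz delta_dd; [|lia|lia].
  rewrite /Delta big_ord1 /= expr0 scale1r; congr Dop.
  have h0 : supp p (q - 1) (b 0%N) by apply: (supp_eq _ _ (s1 0%N)); lia.
  by rewrite -(supp_delta h0).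
split.
  case=> bb [hz hl]; exists (fun j => delta (bb j)); split.
    split=> [j|l hl']; first exact: delta_supp.
    have eX : p + r.+2%:Z - 1 - l%:Z = (p + r.+2%:Z - 1) - l%:Z by [].
    have eY : q + r.+2%:Z - 1 - l%:Z = (q + r.+2%:Z - 2) - l%:Z + 1 by lia.
    by apply/(targ_Delta bb eX eY); apply: hl; lia.
  rewrite hz delta_sum Delta_rev; apply: eq_bigr => i _.
  rewrite deltaZ delta_dd; [|have := ltn_ord i; lia|have := ltn_ord i; lia].
  by rewrite subSS subn0.
case=> b [[s1 d1] hz].
have eb : forall j, delta (b j (p + r.+2%:Z - 1 - j%:Z) (q + r.+2%:Z - 2 - j%:Z)) = b j.
  by move=> j; rewrite -supp_delta.
exists (fun j => b j (p + r.+2%:Z - 1 - j%:Z) (q + r.+2%:Z - 2 - j%:Z)); split.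
  apply: delta_inj; rewrite hz delta_sum Delta_rev; apply: eq_bigr => i _.
  rewrite deltaZ delta_dd; [|have := ltn_ord i; lia|have := ltn_ord i; lia].
  by rewrite subSS subn0 eb.
move=> l hl.
have eX : p + r.+2%:Z - 1 - l%:Z = (p + r.+2%:Z - 1) - l%:Z by [].
have eY : q + r.+2%:Z - 1 - l%:Z = (q + r.+2%:Z - 2) - l%:Z + 1 by lia.
apply/(targ_Delta (fun j => b j (p + r.+2%:Z - 1 - j%:Z) (q + r.+2%:Z - 2 - j%:Z)) eX eY).
rewrite -(d1 l); last by lia.
by apply: Delta_eq => j _; rewrite eb.
Qed.

End Chain.


Section Main.
Variables (R : comPzRingType) (n : option nat) (A B : mcx R n) (f : mhom A B).

Definition JT k := forall P Q (be : nat -> tot B), chainT k P Q be ->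
  exists al : nat -> tot A, chainT k P Q al /\ forall j, (j < maxn k 1)%N -> Fh f (al j) = be j.

Definition IT r := forall p q (al : nat -> tot A) (b g : nat -> tot B),
  chainT r.+1 p q al ->
  chainT r (p + r.+1%:Z - 1) (q + r.+1%:Z - 2) b ->
  chainT r (p - 1) (q - 1) g ->
  (forall j, (j < r.+1)%N -> Fh f (al j) = Phi r.+1 b g j) ->
  exists (b' g' : nat -> tot A),
    chainT r (p + r.+1%:Z - 1) (q + r.+1%:Z - 2) b' /\ chainT r (p - 1) (q - 1) g' /\
    (forall j, (j < r.+1)%N -> Fh f (b' j) = b j) /\ (forall j, (j < r)%N -> Fh f (g' j) = g j) /\
    (forall j, (j < r.+1)%N -> al j = Phi r.+1 b' g' j).

Lemma Phi0 (C : mcx R n) r (b g : nat -> tot C) : Phi r.+1 b g 0 = Delta b r.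
Proof. by rewrite /Phi Psi0 addr0. Qed.

Lemma JS r : Eqi r f -> JT 0 -> JT r -> JT r.+1.
Proof.
move=> hE hJ0 hJr P Q be hbe.
have [s1 d1] := hbe.
have hz : Zr r.+1 (be 0%N P Q).
  apply/ZrT; exists be; split => //; apply: supp_delta; apply: (supp_eq _ _ (s1 0%N)); lia.
have [z' [hz' hbr]] := (hE P Q).1 _ hz.
move/ZrT: hz' => [zc [hzc hzc0]].
move/BrT: hbr => [w [hw hwr]].
have [w1 [hw1 fw1]] := hJr _ _ _ hw.
have hws : chainT 0 (P + r.+1%:Z - 1 - r%:Z) (Q + r.+1%:Z - 2 - r%:Z)
              (fun j => if j == 0%N then w r else 0).
  split => [[|j]|l //]; last exact: supp0.
  by apply: (supp_eq _ _ (hw.1 r)); lia.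
have [om [hom fom]] := hJ0 _ _ _ hws.
pose w2 := fun j => if (j < r)%N then w1 j else if j == r then om 0%N else 0.
have hw2 : chainT r (P + r.+1%:Z - 1) (Q + r.+1%:Z - 2) w2.
  apply: (chain_trunc hw1) => [j|j hj]; last by rewrite /w2 hj.
  rewrite /w2; case: ifP => _; first exact: hw1.1.
  case: eqP => [->|_]; last exact: supp0.
  by apply: (supp_eq _ _ (hom.1 0%N)); lia.
have fw2 : forall j, (j < r.+1)%N -> Fh f (w2 j) = w j.
  move=> j hj; rewrite /w2; case: ifP => hjr; first by apply: fw1; lia.
  have -> : j = r by move/negbT: hjr; lia.
  by rewrite eqxx fom.
pose ze := fun j => zc j - Psi r.+1 w2 j.
have hze : chainT r.+1 P Q ze.
  apply: (chainB hzc); apply: chain_Psi => [m _|t ht]; first exact: hw2.1.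
  exact: hw2.2.
have fze0 : Fh f (ze 0%N) = be 0%N.
  rewrite /ze FhB Fh_Psi Psi0 hzc0 Fh_delta.
  have -> : Delta (fun m => Fh f (w2 m)) r = Delta w r.
    by apply: Delta_eq => j hj; apply: fw2.
  rewrite -hwr deltaB opprB addrC subrK.
  by rewrite -supp_delta //; apply: (supp_eq _ _ (s1 0%N)); lia.
pose et := fun j => be j - Fh f (ze j).
have het : chainT r.+1 P Q et := chainB hbe (Fh_chain f hze).
have het0 : et 0%N = 0 by rewrite /et fze0 subrr.
have [e2 [he2 fe2]] := hJr _ _ _ (chain_shiftdown het het0).
exists (fun j => ze j + shiftup e2 j); split.
  exact: chainD hze (chain_shiftup he2).
move=> j hj; rewrite FhD; case: j hj => [|j] hj /=.
  by rewrite Fh0 addr0 fze0.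
rewrite fe2; last by lia.
by rewrite /et addrC subrK.
Qed.

Lemma EJ_IT r : Eqi r f -> JT 0 -> JT r -> IT r.
Proof.
move=> hE hJ0 hJr p q al b g hal hb hg hF.
have hJs := JS hE hJ0 hJr.
have [s1 d1] := hal.
have e0 : al 0%N = delta (al 0%N p q).
  by apply: supp_delta; apply: (supp_eq _ _ (s1 0%N)); lia.
have hFal0 : Fh f (al 0%N) = Delta b r by rewrite hF // Phi0.
have hz : Zr r.+1 (al 0%N p q) by apply/ZrT; exists al.
have hbz : Br r.+1 (hf f (al 0%N p q)).
  by apply/BrT; exists b; split=> //; rewrite -Fh_delta -e0.
have := (hE p q).2 _ hz hbz; move/BrT => [a [ha hda]].
pose dl := fun j => b j - Fh f (a j).
have hdl : chainT r.+1 (p + r.+1%:Z - 1) (q + r.+1%:Z - 2) dl.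
  split=> [j|l hl]; first by apply: suppB; [exact: hb.1 | apply: Fh_supp; exact: ha.1].
  rewrite /dl DeltaB -Fh_Delta.
  have : (l < r)%N || (l == r) by lia.
  case/orP => [hlr|/eqP ->]; first by rewrite hb.2 // ha.2 // Fh0 subrr.
  by rewrite -hda -e0 hFal0 subrr.
have [th [hth fth]] := hJs _ _ _ hdl.
pose b' := fun j => a j + th j.
have hb' : chainT r (p + r.+1%:Z - 1) (q + r.+1%:Z - 2) b'.
  exact: chainD ha (chain_weak (leqnSn r) hth).
have Db' : Delta b' r = al 0%N.
  by rewrite /b' DeltaD (hth.2 r (ltnSn r)) addr0 -hda -e0.
have fb' : forall j, (j < r.+1)%N -> Fh f (b' j) = b j.
  move=> j hj; rewrite /b' FhD fth; last by lia.
  by rewrite /dl addrC subrK.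
have hsd : chainT r.+1 p q (fun j => al j - Psi r.+1 b' j).
  apply: (chainB hal); apply: chain_Psi => [m _|t ht]; first exact: hb'.1.
  exact: hb'.2.
have hsd0 : al 0%N - Psi r.+1 b' 0 = 0 by rewrite Psi0 Db' subrr.
exists b', (fun j => al j.+1 - Psi r.+1 b' j.+1).
split; first exact: hb'.
split; first exact: (chain_shiftdown hsd hsd0).
split; first exact: fb'.
split.
  move=> j hj; rewrite FhB Fh_Psi hF //; rewrite /Phi (Psi_eq _ fb') /=.
  by rewrite addrC addKr.
move=> j hj; case: j hj => [|j] hj; first by rewrite Phi0 Db'.
by rewrite /Phi /= addrC subrK.
Qed.

Lemma IT_JS r : IT r -> JT r.+1.
Proof.
move=> hI P Q be hbe.
have hb : chainT r ((P - r%:Z) + r.+1%:Z - 1) ((Q - r%:Z + 1) + r.+1%:Z - 2) be.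
  by apply: (chain_eq _ _ (chain_weak (leqnSn r) hbe)); lia.
have hPs : chainT r.+1 (P - r%:Z) (Q - r%:Z + 1) (fun j => - Psi r.+1 be j).
  apply: chainN; apply: chain_Psi => [m _|t ht]; last by apply: hbe.2; lia.
  by apply: (supp_eq _ _ (hbe.1 m)); lia.
have hPs0 : - Psi r.+1 be 0 = 0 by rewrite Psi0 (hbe.2 r (ltnSn r)) oppr0.
have hg := chain_shiftdown hPs hPs0.
have hF : forall j, (j < r.+1)%N -> Fh f ((fun _ => 0 : tot A) j) =
                    Phi r.+1 be (fun j => - Psi r.+1 be j.+1) j.
  move=> j hj; rewrite Fh0; case: j hj => [|j] hj; first by rewrite Phi0 hbe.2.
  by rewrite /Phi /= subrr.
have [b' [g' [hb' [_ [fb' [_ h0]]]]]] := hI _ _ _ _ _ (chain0 _ _ _ _) hb hg hF.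
have hc : chainT r.+1 ((P - r%:Z) + r.+1%:Z - 1) ((Q - r%:Z + 1) + r.+1%:Z - 2) b'.
  split; first exact: hb'.1.
  move=> l hl; have : (l < r)%N || (l == r) by lia.
  case/orP => [hlr|/eqP ->]; first exact: hb'.2.
  by have := h0 0%N isT; rewrite Phi0.
exists b'; split; first by apply: (chain_eq _ _ hc); lia.
by move=> j hj; apply: fb'; lia.
Qed.

Lemma IT_J0 r : IT r -> JT 0.
Proof.
move=> hI P Q be [s1 _].
have hJs := IT_JS hI.
pose y := be 0%N.
have sy : supp P Q y by apply: (supp_eq _ _ (s1 0%N)); lia.
have sy' : supp P (Q + 1 - 1) y by apply: (supp_eq _ _ sy); lia.
have [al [hal fal]] := hJs P (Q + 1) (fun j => Dop j y) (chain_const _ sy').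
pose b := fun j => if j == r then y else 0.
have hb : chainT r (P + r.+1%:Z - 1) (Q + 1 + r.+1%:Z - 2) b.
  split=> [j|l hl].
    rewrite /b; case: eqP => [->|_]; last exact: supp0.
    by apply: (supp_eq _ _ sy); lia.
  rewrite (Delta_eq (al' := fun _ => 0)) ?Delta0 // => j hj.
  by rewrite /b; case: eqP => // e; lia.
have hF : forall j, (j < r.+1)%N -> Fh f (al j) = Phi r.+1 b (fun _ => 0) j.
  move=> j hj; rewrite fal; last by lia.
  have hS : Sfam r.+1 b j = 0.
    rewrite Sfam_alt big_nat_cond big1 // => m /andP [/andP [_ hm] _].
    by rewrite /b (_ : (m == r) = false) ?Dop0 ?scaler0 //; lia.
  have hs : shiftup (fun _ => 0 : tot B) j = 0 by case: j {hj hS}.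
  by rewrite /Phi /Psi hS hs /= /b eqxx !addr0.
have [b' [g' [hb' [_ [fb' _]]]]] := hI P (Q + 1) al b (fun _ => 0) hal hb (chain0 _ _ _ _) hF.
exists (fun j => if j == 0%N then b' r else 0); split.
  split => [[|j]|l //]; last exact: supp0.
  by apply: (supp_eq _ _ (hb'.1 r)); lia.
move=> j hj; have -> : j = 0%N by lia.
by rewrite /= fb' // /b eqxx.
Qed.

Lemma IT_Jr r : IT r -> JT r.
Proof.
case: r => [|r] hI; first exact: IT_J0 hI.
move=> P Q y hy.
have hJs := IT_JS hI.
pose b := fun j => if (j < r.+1)%N then y j else 0.
have hb0 : chainT r.+1 P Q b.
  apply: (chain_trunc hy) => [j|j hj]; last by rewrite /b hj.
  by rewrite /b; case: ifP => _; [exact: hy.1 | exact: supp0].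
have hb : chainT r.+1 ((P - r.+1%:Z) + r.+2%:Z - 1) ((Q - r.+1%:Z + 1) + r.+2%:Z - 2) b.
  by apply: (chain_eq _ _ hb0); lia.
have hPs : chainT r.+2 (P - r.+1%:Z) (Q - r.+1%:Z + 1) (Psi r.+2 b).
  by apply: chain_Psi => [m _|t ht]; [exact: hb.1 | exact: hb.2].
have [al [hal fal]] := hJs _ _ _ hPs.
have hF : forall j, (j < r.+2)%N -> Fh f (al j) = Phi r.+2 b (fun _ => 0) j.
  move=> j hj; rewrite fal; last by lia.
  by rewrite /Phi; case: j {hj} => [|j] /=; rewrite addr0.
have [b' [g' [hb' [_ [fb' _]]]]] := hI _ _ al b (fun _ => 0) hal hb (chain0 _ _ _ _) hF.
exists b'; split; first by apply: (chain_eq _ _ hb'); lia.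
move=> j hj; rewrite fb'; last by lia.
have hj' : (j < r.+1)%N by lia.
by rewrite /b hj'.
Qed.

Lemma IT_Eqi r : IT r -> Eqi r f.
Proof.
move=> hI; have hJs := IT_JS hI; move=> p q; split.
  move=> z /ZrT [be [hbe hbe0]].
  have [al [hal fal]] := hJs _ _ _ hbe.
  have e0 : al 0%N = delta (al 0%N p q).
    by apply: supp_delta; apply: (supp_eq _ _ (hal.1 0%N)); lia.
  exists (al 0%N p q); split; first by apply/ZrT; exists al.
  apply/BrT; exists (fun _ => 0); split; first exact: chain0.
  by rewrite Delta0 deltaB -Fh_delta -e0 fal // hbe0 subrr.
move=> z /ZrT [al [hal hal0]] /BrT [b [hb hbz]].
have hsd : chainT r.+1 p q (fun j => Fh f (al j) - Psi r.+1 b j).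
  apply: (chainB (Fh_chain f hal)); apply: chain_Psi => [m _|t ht]; first exact: hb.1.
  exact: hb.2.
have hsd0 : Fh f (al 0%N) - Psi r.+1 b 0 = 0 by rewrite Psi0 hal0 Fh_delta hbz subrr.
have hg := chain_shiftdown hsd hsd0.
have hF : forall j, (j < r.+1)%N -> Fh f (al j) = Phi r.+1 b (fun j => Fh f (al j.+1) - Psi r.+1 b j.+1) j.
  move=> j hj; case: j hj => [|j] hj.
    by rewrite Phi0; apply/eqP; rewrite -subr_eq0 -Psi0; apply/eqP.
  by rewrite /Phi /= addrC subrK.
have [b' [g' [hb' [_ [_ [_ h0]]]]]] := hI p q al b _ hal hb hg hF.
apply/BrT; exists b'; split => //.
by rewrite -hal0 h0 // Phi0.
Qed.
End Main.


Section Free.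
Variables (R : comPzRingType) (n : option nat) (G : Type) (gp gq : G -> int)
  (Val : forall C : mcx R n, (forall g, C (gp g) (gq g)) -> Prop).

Inductive term : int -> int -> Type :=
| Tgen (g : G) : term (gp g) (gq g)
| Tzero p q : term p q
| Tadd p q : term p q -> term p q -> term p q
| Tscale p q : R -> term p q -> term p q
| Tdd (i : nat) p q p' q' : term p q -> term p' q'.

Fixpoint eval (C : mcx R n) (c : forall g, C (gp g) (gq g)) p q (t : term p q) {struct t} : C p q :=
  match t in term p q return C p q with
  | Tgen g => c g
  | Tzero _ _ => 0
  | Tadd _ _ t1 t2 => eval c t1 + eval c t2
  | Tscale _ _ a t1 => a *: eval c t1
  | Tdd i _ _ _ _ t1 => dd C i (eval c t1)
  end.

Definition teq p q (t1 t2 : term p q) : Prop :=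
  forall (C : mcx R n) (c : forall g, C (gp g) (gq g)), Val c -> eval c t1 = eval c t2.

Definition Qt p q := { S : term p q -> Prop | exists t, S = teq t }.
Definition cls p q (t : term p q) : Qt p q := exist _ (teq t) (ex_intro _ t erefl).
Definition rep p q (x : Qt p q) : term p q := proj1_sig (cid (proj2_sig x)).
Lemma repP p q (x : Qt p q) : proj1_sig x = teq (rep x).
Proof. by rewrite /rep; case: cid. Qed.

Lemma cls_eq p q (t1 t2 : term p q) : teq t1 t2 -> cls t1 = cls t2.
Proof.
move=> h; apply: eq_exist; apply: funext => t; apply: propext; split.
  by move=> h1 C c H; rewrite -(h C c H) (h1 C c H).
by move=> h1 C c H; rewrite (h C c H) (h1 C c H).
Qed.
Lemma cls_rep p q (x : Qt p q) : cls (rep x) = x.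
Proof. by case: x => S pS; apply: eq_exist; rewrite -(repP (exist _ S pS)). Qed.
Lemma rep_cls p q (t : term p q) : teq (rep (cls t)) t.
Proof.
have := repP (cls t); rewrite /= => e.
by rewrite -e => C c H.
Qed.

Definition evQ (C : mcx R n) (c : forall g, C (gp g) (gq g)) p q (x : Qt p q) : C p q :=
  eval c (rep x).
Lemma evQ_cls C c (H : Val c) p q (t : term p q) : evQ c (cls t) = eval (C := C) c t.
Proof. exact: rep_cls. Qed.
Lemma Qext p q (x y : Qt p q) :
  (forall (C : mcx R n) (c : forall g, C (gp g) (gq g)), Val c -> evQ c x = evQ c y) -> x = y.
Proof. by move=> h; rewrite -(cls_rep x) -(cls_rep y); apply: cls_eq. Qed.

Definition Qadd p q (x y : Qt p q) := cls (Tadd (rep x) (rep y)).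
Definition Qopp p q (x : Qt p q) := cls (Tscale (-1) (rep x)).
Definition Qzero p q : Qt p q := cls (@Tzero p q).
Definition Qscale p q (a : R) (x : Qt p q) := cls (Tscale a (rep x)).

Section Ev.
Variables (C : mcx R n) (c : forall g, C (gp g) (gq g)) (H : Val c) (p q : int).
Lemma evQ_add (x y : Qt p q) : evQ c (Qadd x y) = evQ c x + evQ c y.
Proof. by rewrite /Qadd evQ_cls. Qed.
Lemma evQ_opp (x : Qt p q) : evQ c (Qopp x) = - evQ c x.
Proof. by rewrite /Qopp evQ_cls //= scaleN1r. Qed.
Lemma evQ_zero : evQ c (Qzero p q) = 0.
Proof. by rewrite /Qzero evQ_cls. Qed.
Lemma evQ_scale a (x : Qt p q) : evQ c (Qscale a x) = a *: evQ c x.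
Proof. by rewrite /Qscale evQ_cls. Qed.
End Ev.

Section Inst.
Variables (p q : int).
HB.instance Definition _ := gen_eqMixin (Qt p q).
HB.instance Definition _ := gen_choiceMixin (Qt p q).
Lemma QaddA : associative (@Qadd p q).
Proof. by move=> x y z; apply: Qext => C c H; rewrite !evQ_add // addrA. Qed.
Lemma QaddC : commutative (@Qadd p q).
Proof. by move=> x y; apply: Qext => C c H; rewrite !evQ_add // addrC. Qed.
Lemma Qadd0 : left_id (Qzero p q) (@Qadd p q).
Proof. by move=> x; apply: Qext => C c H; rewrite !evQ_add // evQ_zero // add0r. Qed.
Lemma QaddN : left_inverse (Qzero p q) (@Qopp p q) (@Qadd p q).
Proof. by move=> x; apply: Qext => C c H; rewrite !evQ_add // evQ_opp // evQ_zero // addNr. Qed.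
HB.instance Definition _ := GRing.isZmodule.Build (Qt p q) QaddA QaddC Qadd0 QaddN.
Lemma QscaleA a b (v : Qt p q) : Qscale a (Qscale b v) = Qscale (a * b) v.
Proof. by apply: Qext => C c H; rewrite !evQ_scale // scalerA. Qed.
Lemma Qscale1 : left_id 1 (@Qscale p q).
Proof. by move=> x; apply: Qext => C c H; rewrite !evQ_scale // scale1r. Qed.
Lemma QscaleDr : right_distributive (@Qscale p q) +%R.
Proof. by move=> a x y; apply: Qext => C c H; rewrite /= !(evQ_scale, evQ_add) // scalerDr. Qed.
Lemma QscaleDl (v : Qt p q) : {morph (@Qscale p q)^~ v: a b / a + b}.
Proof. by move=> a b; apply: Qext => C c H; rewrite /= !(evQ_scale, evQ_add) // scalerDl. Qed.
HB.instance Definition _ := GRing.Zmodule_isLmodule.Build R (Qt p q) QscaleA Qscale1 QscaleDr QscaleDl.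
End Inst.

Definition ddF i p q p' q' (x : Qt p q) : Qt p' q' := cls (@Tdd i p q p' q' (rep x)).

Section Ev2.
Variables (C : mcx R n) (c : forall g, C (gp g) (gq g)) (H : Val c).
Lemma evQ_addg p q (x y : Qt p q) : evQ c (x + y) = evQ c x + evQ c y.
Proof. exact: evQ_add. Qed.
Lemma evQ_0g p q : evQ c (0 : Qt p q) = 0.
Proof. exact: evQ_zero. Qed.
Lemma evQ_scaleg p q a (x : Qt p q) : evQ c (a *: x) = a *: evQ c x.
Proof. exact: evQ_scale. Qed.
Lemma evQ_sumg p q I (r : seq I) (P : pred I) (F : I -> Qt p q) :
  evQ c (\sum_(k <- r | P k) F k) = \sum_(k <- r | P k) evQ c (F k).
Proof. exact: (big_morph (@evQ C c p q) (@evQ_addg p q) (evQ_0g p q)). Qed.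
Lemma evQ_dd i p q p' q' (x : Qt p q) : evQ c (@ddF i p q p' q' x) = dd C i (evQ c x).
Proof. by rewrite /ddF evQ_cls. Qed.
End Ev2.

Definition Fr : mcx R n.
Proof.
refine (@Mcx R n (fun p q => (Qt p q : lmodType R)) (@ddF) _ _ _ _).
- move=> i p q p' q' a u v; apply: Qext => C c H.
  by rewrite !(evQ_dd H, evQ_addg H, evQ_scaleg H) ddD ddZ.
- move=> i p q p' q' x h; apply: Qext => C c H.
  by rewrite evQ_dd // evQ_0g // dd_deg.
- move=> i p q p' q' x h; apply: Qext => C c H.
  by rewrite evQ_dd // evQ_0g // dd_vanish.
- move=> l p q p' q' x; apply: Qext => C c H.
  rewrite evQ_sumg // evQ_0g // -[RHS](dd_rel C l p q p' q' (evQ c x)).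
  by apply: eq_bigr => i _; rewrite evQ_scaleg // !evQ_dd.
Defined.

Definition gen g : Fr (gp g) (gq g) := cls (Tgen g).

Definition phiF (C : mcx R n) (c : forall g, C (gp g) (gq g)) (H : Val c) : mhom Fr C.
Proof.
refine (@MHom R n Fr C (fun p q x => evQ c x) _ _).
- by move=> p q a u v; rewrite /= evQ_addg // evQ_scaleg.
- by move=> i p q p' q' x; rewrite /= evQ_dd.
Defined.

Lemma phiF_gen C c (H : Val c) g : hf (phiF (C := C) H) (gen g) = c g.
Proof. by rewrite /= /gen evQ_cls. Qed.

Lemma Fr_ext p q (x y : Fr p q) :
  (forall (C : mcx R n) (c : forall g, C (gp g) (gq g)) (H : Val c),
      hf (phiF H) x = hf (phiF H) y) -> x = y.
Proof. by move=> h; apply: Qext => C c H; apply: (h C c H). Qed.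

Lemma Fr_uniq (C : mcx R n) (phi psi : mhom Fr C) :
  (forall g, hf phi (gen g) = hf psi (gen g)) -> heq phi psi.
Proof.
move=> hg p q x; rewrite -(cls_rep x); elim: (rep x) => {p q x}.
- exact: hg.
- by move=> p q; rewrite (_ : cls (@Tzero p q) = 0) // !hf0.
- move=> p q t1 IH1 t2 IH2.
  have -> : cls (Tadd t1 t2) = (cls t1 + cls t2 : Fr p q).
    by apply: Qext => C' c H; rewrite evQ_addg // !evQ_cls.
  by rewrite !hfD IH1 IH2.
- move=> p q a t IH.
  have -> : cls (Tscale a t) = (a *: cls t : Fr p q).
    by apply: Qext => C' c H; rewrite evQ_scaleg // !evQ_cls.
  by rewrite !hfZ IH.
- move=> i p q p' q' t IH.
  have -> : cls (@Tdd i p q p' q' t) = dd Fr i (p' := p') (q' := q') (cls t).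
    by apply: Qext => C' c H; rewrite /= evQ_dd // !evQ_cls.
  by rewrite !hf_comm IH.
Qed.
End Free.


Section Iface.
Variables (R : comPzRingType) (n : option nat).
Implicit Types (A B C W Z : mcx R n).

Definition zsum C P Q (a : forall j : nat, C (P - j%:Z) (Q - j%:Z)) l : C (P - l%:Z) (Q - l%:Z + 1) :=
  \sum_(j < l.+1) (-1) ^+ (l - j) *: dd C (l - j) (p' := P - l%:Z) (q' := Q - l%:Z + 1) (a j).

Lemma zrelE C P Q (a : forall j : nat, C (P - j%:Z) (Q - j%:Z)) l : zrel a l <-> zsum a l = 0.
Proof. by []. Qed.

Lemma hf_zsum A B (phi : mhom A B) P Q (a : forall j : nat, A (P - j%:Z) (Q - j%:Z)) l :
  hf phi (zsum a l) = zsum (fun j => hf phi (a j)) l.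
Proof. by rewrite /zsum hf_sum; apply: eq_bigr => j _; rewrite hfZ hf_comm. Qed.

Lemma zrel_hf A B (phi : mhom A B) P Q (a : forall j : nat, A (P - j%:Z) (Q - j%:Z)) l :
  zrel a l -> zrel (fun j => hf phi (a j)) l.
Proof. by move/zrelE => h; apply/zrelE; rewrite -hf_zsum h hf0. Qed.

Lemma zrel_eq C P Q (a a' : forall j : nat, C (P - j%:Z) (Q - j%:Z)) l :
  (forall j, (j <= l)%N -> a j = a' j) -> zrel a l -> zrel a' l.
Proof.
move=> h h0; rewrite /zrel -[RHS]h0; apply: eq_bigr => j _; rewrite h //.
by have := ltn_ord j.
Qed.

Definition mcomp A B C (g : mhom B C) (f : mhom A B) : mhom A C.
Proof.
refine (@MHom R n A C (fun p q x => hf g (hf f x)) _ _).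
- by move=> p q a u v; rewrite hfD hfZ hfD hfZ.
- by move=> i p q p' q' x; rewrite !hf_comm.
Defined.

Lemma zero_elem p q (x : zero_mcx R n p q) : x = 0.
Proof. exact: thinmx0. Qed.

Lemma Fh_Phi A B (f : mhom A B) s (b g : nat -> tot A) j :
  Fh f (Phi s b g j) = Phi s (fun m => Fh f (b m)) (fun m => Fh f (g m)) j.
Proof. by rewrite /Phi FhD Fh_Psi; case: j => [|j] //=; rewrite Fh0. Qed.

Lemma Phi_eq C r (b b' g g' : nat -> tot C) j :
  (forall m, (m < r.+1)%N -> b m = b' m) -> (forall m, (m < r)%N -> g m = g' m) ->
  (j < r.+1)%N -> Phi r.+1 b g j = Phi r.+1 b' g' j.
Proof.
move=> hb hg hj; rewrite /Phi (Psi_eq _ hb); case: j hj => [|j] hj //=.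
by rewrite hg.
Qed.

Definition bT W r p q (b : forall j : nat, W (p + r.+1%:Z - 1 - j%:Z) (q + r.+1%:Z - 2 - j%:Z))
  (e : W p (q - 1)) (m : nat) : tot W := if m == r then delta e else delta (b m).
Definition cT W p q (c : forall j : nat, W (p - 1 - j%:Z) (q - 1 - j%:Z)) (m : nat) : tot W :=
  delta (c m).

Definition iexpr W r p q (b : forall j : nat, W (p + r.+1%:Z - 1 - j%:Z) (q + r.+1%:Z - 2 - j%:Z))
  (e : W p (q - 1)) (c : forall j : nat, W (p - 1 - j%:Z) (q - 1 - j%:Z)) (j : nat) :
  W (p - j%:Z) (q - j%:Z) :=
      dd W j (p' := p - j%:Z) (q' := q - j%:Z) e
      + (-1) ^+ j *: \sum_(j.+1 <= k < r.+1 + j)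
                        (-1) ^+ k *: dd W k (p' := p - j%:Z) (q' := q - j%:Z)
                                            (b (r.+1 + j - 1 - k)%N)
      + (match j as j0 return W (p - j0%:Z) (q - j0%:Z) with
         | 0%N => 0
         | j'.+1 => tr (p - j'.+1%:Z) (q - j'.+1%:Z) (c j') end).

Lemma iexpr_T W r p q b e c j :
  delta (@iexpr W r p q b e c j) = Phi r.+1 (bT b e) (cT c) j.
Proof.
rewrite /iexpr /Phi /Psi /Sfam !deltaD; congr (_ + _ + _).
- by rewrite /= /bT eqxx delta_dd //; lia.
- rewrite deltaZ delta_sum; congr (_ *: _).
  rewrite big_nat_cond [RHS]big_nat_cond; apply: eq_bigr => k /andP [/andP [h1 h2] _].
  rewrite deltaZ delta_dd; [|lia|lia].
  by rewrite /bT (_ : ((r.+1 + j - 1 - k)%N == r) = false) //; lia.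
- by case: j => [|j] /=; [rewrite delta0 | rewrite /cT delta_tr //; lia].
Qed.

Lemma bT_chain W r p q b e :
  (forall l, (l < r)%N -> zrel b l) -> chainT r (p + r.+1%:Z - 1) (q + r.+1%:Z - 2) (@bT W r p q b e).
Proof.
move=> hb; split=> [j|l hl].
  rewrite /bT; case: eqP => [->|_]; last exact: delta_supp.
  by apply: (supp_eq _ _ (delta_supp e)); lia.
rewrite (Delta_eq (al' := fun j => delta (b j))); first by apply/zrel_Delta; apply: hb.
by move=> j hj; rewrite /bT (_ : (j == r) = false) //; lia.
Qed.

Lemma cT_chain W r p q c :
  (forall l, (l < r)%N -> zrel c l) -> chainT r (p - 1) (q - 1) (@cT W p q c).
Proof.
move=> hc; split=> [j|l hl]; first exact: delta_supp.
by apply/zrel_Delta; apply: hc.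
Qed.

Lemma iexpr_zrel W r p q b e c :
  (forall l, (l < r)%N -> zrel b l) -> (forall l, (l < r)%N -> zrel c l) ->
  forall l, (l < r.+1)%N -> zrel (@iexpr W r p q b e c) l.
Proof.
move=> hb hc l hl; apply/zrel_Delta.
rewrite (Delta_eq (al' := Phi r.+1 (bT b e) (cT c))); last by move=> j _; exact: iexpr_T.
rewrite /Phi (DeltaD (Psi r.+1 (bT b e)) (shiftup (cT c))) Delta_Psi; last first.
  by move=> t ht; apply: (bT_chain e hb).2.
case: l hl => [|l] hl; first by rewrite Delta_shift0 addr0.
by rewrite Delta_shift (cT_chain hc).2 // addr0.
Qed.
End Iface.


Inductive gBW := GB of nat | GE | GC of nat.

Section Fz.
Variables (R : comPzRingType) (n : option nat).

Definition ZWval s p q (C : mcx R n) (c : forall j : nat, C (p - j%:Z) (q - j%:Z)) : Prop :=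
  (forall l, (l < s)%N -> zrel c l) /\ (forall j, (maxn s 1 <= j)%N -> c j = 0).
Definition ZWF s p q : mcx R n :=
  @Fr R n nat (fun j => p - j%:Z) (fun j => q - j%:Z) (@ZWval s p q).
Definition aZ s p q (j : nat) : ZWF s p q (p - j%:Z) (q - j%:Z) :=
  @gen R n nat (fun j => p - j%:Z) (fun j => q - j%:Z) (@ZWval s p q) j.

Lemma ZW_ok s p q : @IsZW R n s p q _ (aZ s p q).
Proof.
split.
  move=> l hl; apply/zrelE; apply: Fr_ext => C c H.
  rewrite hf_zsum hf0.
  have -> : (fun j => hf (phiF H) (aZ s p q j)) = c.
    by apply: functional_extensionality_dep => j; exact: (phiF_gen H j).
  exact: H.1.
move=> C c hc; split.
  pose c' := fun j => if (j < maxn s 1)%N then c j else 0.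
  have H : @ZWval s p q C c'.
    split=> [l hl|j hj]; last by rewrite /c' ifF //; lia.
    by apply: (zrel_eq _ (hc l hl)) => j hj; rewrite /c' ifT //; lia.
  by exists (phiF H) => j hj; rewrite phiF_gen /c' hj.
move=> phi psi h; apply: Fr_uniq => j.
case: (ltnP j (maxn s 1)) => hj; first exact: h.
have -> : @gen R n nat (fun j => p - j%:Z) (fun j => q - j%:Z) (@ZWval s p q) j = 0.
  by apply: Fr_ext => C' c' H'; rewrite phiF_gen hf0; exact: H'.2.
by rewrite !hf0.
Qed.

Definition gpB (s : nat) (p : int) (g : gBW) : int :=
  match g with GB j => p + s%:Z - 1 - j%:Z | GE => p | GC j => p - 1 - j%:Z end.
Definition gqB (s : nat) (q : int) (g : gBW) : int :=
  match g with GB j => q + s%:Z - 2 - j%:Z | GE => q - 1 | GC j => q - 1 - j%:Z end.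
Definition BWval s p q (C : mcx R n) (c : forall g, C (gpB s p g) (gqB s q g)) : Prop :=
  (forall l, (l < s.-1)%N -> zrel (P := p + s%:Z - 1) (Q := q + s%:Z - 2) (fun j => c (GB j)) l) /\
  (forall l, (l < s.-1)%N -> zrel (P := p - 1) (Q := q - 1) (fun j => c (GC j)) l) /\
  (forall j, (s.-1 <= j)%N -> c (GB j) = 0 /\ c (GC j) = 0).
Definition BWF s p q : mcx R n := @Fr R n gBW (gpB s p) (gqB s q) (@BWval s p q).
Definition genB s p q g : BWF s p q (gpB s p g) (gqB s q g) :=
  @gen R n gBW (gpB s p) (gqB s q) (@BWval s p q) g.
Definition bB s p q (j : nat) : BWF s p q (p + s%:Z - 1 - j%:Z) (q + s%:Z - 2 - j%:Z) := genB s p q (GB j).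
Definition eB s p q : BWF s p q p (q - 1) := genB s p q GE.
Definition cB s p q (j : nat) : BWF s p q (p - 1 - j%:Z) (q - 1 - j%:Z) := genB s p q (GC j).

Lemma BW_ok s p q : @IsBW R n s p q _ (bB s p q) (eB s p q) (cB s p q).
Proof.
split.
  move=> l hl; apply/zrelE; apply: Fr_ext => C c H.
  rewrite hf_zsum hf0.
  have -> : (fun j => hf (phiF H) (bB s p q j)) = (fun j => c (GB j)).
    by apply: functional_extensionality_dep => j; exact: (phiF_gen H (GB j)).
  exact: H.1.
split.
  move=> l hl; apply/zrelE; apply: Fr_ext => C c H.
  rewrite hf_zsum hf0.
  have -> : (fun j => hf (phiF H) (cB s p q j)) = (fun j => c (GC j)).
    by apply: functional_extensionality_dep => j; exact: (phiF_gen H (GC j)).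
  exact: H.2.1.
move=> C b' e' c' hb hc; split.
  pose asg := fun g => match g as g0 return C (gpB s p g0) (gqB s q g0) with
                       | GB j => if (j < s.-1)%N then b' j else 0
                       | GE => e'
                       | GC j => if (j < s.-1)%N then c' j else 0 end.
  have H : @BWval s p q C asg.
    split.
      move=> l hl; apply: (zrel_eq _ (hb l hl)) => j hj.
      by rewrite /asg ifT //; lia.
    split.
      move=> l hl; apply: (zrel_eq _ (hc l hl)) => j hj.
      by rewrite /asg ifT //; lia.
    by move=> j hj; rewrite /asg !ifF //; lia.
  exists (phiF H); split.
    by move=> j hj; rewrite /bB /genB (phiF_gen H (GB j)) /asg hj.
  split; first by rewrite /eB /genB (phiF_gen H GE).
  by move=> j hj; rewrite /cB /genB (phiF_gen H (GC j)) /asg hj.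
move=> phi psi h1 h2 h3; apply: Fr_uniq => -[j||j].
- case: (ltnP j s.-1) => hj; first exact: h1.
  have -> : @gen R n gBW (gpB s p) (gqB s q) (@BWval s p q) (GB j) = 0.
    by apply: Fr_ext => C2 c2 H'; rewrite (phiF_gen H' (GB j)) hf0; exact: (H'.2.2 j hj).1.
  by rewrite !hf0.
- exact: h2.
- case: (ltnP j s.-1) => hj; first exact: h3.
  have -> : @gen R n gBW (gpB s p) (gqB s q) (@BWval s p q) (GC j) = 0.
    by apply: Fr_ext => C2 c2 H'; rewrite (phiF_gen H' (GC j)) hf0; exact: (H'.2.2 j hj).2.
  by rewrite !hf0.
Qed.

Lemma iota_ok r p q : exists i : mhom (ZWF r.+1 p q) (BWF r.+1 p q),
  @iota_spec R n r.+1 p q _ _ (aZ r.+1 p q) (bB r.+1 p q) (eB r.+1 p q) (cB r.+1 p q) i.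
Proof.
have [_ U] := ZW_ok r.+1 p q.
have [hb [hc _]] := BW_ok r.+1 p q.
have [[phi hphi] _] := U _ (iexpr (bB r.+1 p q) (eB r.+1 p q) (cB r.+1 p q)) (iexpr_zrel _ hb hc).
exists phi => j hj; rewrite hphi; [reflexivity | lia].
Qed.
End Fz.


Section Final.
Variables (R : comPzRingType) (n : option nat) (A B : mcx R n) (f : mhom A B).

Lemma Fh_comp (C D E : mcx R n) (f1 : mhom D E) (h : mhom C D) (v : mhom C E) :
  (forall p q (x : C p q), hf f1 (hf h x) = hf v x) -> forall y, Fh f1 (Fh h y) = Fh v y.
Proof. by move=> H y; apply: fext => p q; rewrite /Fh H. Qed.

Lemma iotaT (r : nat) p q (Z W : mcx R n) a b e c (i : mhom Z W) :
  @iota_spec R n r.+1 p q Z W a b e c i ->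
  forall j, (j < r.+1)%N -> delta (hf i (a j)) = Phi r.+1 (bT b e) (cT c) j.
Proof. by move=> hi j hj; rewrite -iexpr_T; congr delta; exact: hi j hj. Qed.

Lemma JT_Jinj k : JT f k -> Jinj k f.
Proof.
move=> hJ p q Z a [za U] u v _.
pose beT := fun j => delta (hf v (a j)).
have hbe : chainT k p q beT.
  split=> [j|l hl]; first exact: delta_supp.
  by apply/zrel_Delta; apply: zrel_hf; apply: za.
have [al [hal fal]] := hJ _ _ _ hbe.
pose c := fun j => al j (p - j%:Z) (q - j%:Z).
have ec : forall j, delta (c j) = al j by move=> j; rewrite /c -supp_delta //; exact: hal.1 j.
have hc : forall l, (l < k)%N -> zrel c l.
  move=> l hl; apply/zrel_Delta; rewrite -(hal.2 l hl); apply: Delta_eq => j _; exact: ec.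
have [[h hh] _] := U A c hc.
exists h; split.
  by move=> p' q' x; rewrite (zero_elem x) /= !hf0.
move=> p' q' y.
have [_ Uq] := U B (fun j => hf v (a j)) (fun l hl => zrel_hf v (za l hl)).
apply: (Uq (mcomp f h) v) => j hj /=.
rewrite hh //; apply: delta_inj; rewrite -Fh_delta ec fal //.
Qed.

Lemma Jinj_JT k : Jinj k f -> JT f k.
Proof.
move=> hJ P Q be hbe.
have [za U] := ZW_ok R n k P Q.
pose c := fun j => be j (P - j%:Z) (Q - j%:Z).
have ec : forall j, delta (c j) = be j by move=> j; rewrite /c -supp_delta //; exact: hbe.1 j.
have hc : forall l, (l < k)%N -> zrel c l.
  move=> l hl; apply/zrel_Delta; rewrite -(hbe.2 l hl); apply: Delta_eq => j _; exact: ec.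
have [[v hv] _] := U B c hc.
have hcomm : forall p q (x : zero_mcx R n p q),
    hf f (hf (zero_hom A) x) = hf v (hf (zero_hom (ZWF R n k P Q)) x).
  by move=> p q x; rewrite (zero_elem x) /= !hf0.
have [h [_ hh]] := hJ P Q _ _ (ZW_ok R n k P Q) (zero_hom A) v hcomm.
exists (fun j => delta (hf h (aZ R n k P Q j))); split.
  split=> [j|l hl]; first exact: delta_supp.
  by apply/zrel_Delta; apply: zrel_hf; apply: za.
by move=> j hj; rewrite Fh_delta hh hv // ec.
Qed.

Lemma IT_Iinj r : IT f r -> Iinj r f.
Proof.
move=> hI p q Z W a b e c i [za U] [zb [zc UB]] hi u v hcomm.
have hiT := iotaT hi.
pose alT := fun j => delta (hf u (a j)).
pose bBT := fun m => Fh v (bT b e m).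
pose gBT := fun m => Fh v (cT c m).
have hal : chainT r.+1 p q alT.
  split=> [j|l hl]; first exact: delta_supp.
  by apply/zrel_Delta; apply: zrel_hf; apply: za.
have hb : chainT r (p + r.+1%:Z - 1) (q + r.+1%:Z - 2) bBT.
  exact: (Fh_chain v (@bT_chain _ _ W r p q b e zb)).
have hg : chainT r (p - 1) (q - 1) gBT := Fh_chain v (@cT_chain _ _ W r p q c zc).
have hF : forall j, (j < r.+1)%N -> Fh f (alT j) = Phi r.+1 bBT gBT j.
  move=> j hj; rewrite /alT Fh_delta hcomm -Fh_delta hiT // Fh_Phi //.
have [b' [g' [hb' [hg' [fb' [fg' hal']]]]]] := hI p q alT bBT gBT hal hb hg hF.
pose bd := fun j => b' j (p + r.+1%:Z - 1 - j%:Z) (q + r.+1%:Z - 2 - j%:Z).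
pose ed := b' r p (q - 1).
pose cd := fun j => g' j (p - 1 - j%:Z) (q - 1 - j%:Z).
have eb : forall j, delta (bd j) = b' j by move=> j; rewrite /bd -supp_delta //; exact: hb'.1 j.
have ee : delta ed = b' r.
  rewrite /ed -supp_delta //; apply: (supp_eq _ _ (hb'.1 r)); lia.
have ecd : forall j, delta (cd j) = g' j by move=> j; rewrite /cd -supp_delta //; exact: hg'.1 j.
have zbd : forall l, (l < r.+1.-1)%N -> zrel bd l.
  move=> l hl; apply/zrel_Delta; rewrite -(hb'.2 l hl); apply: Delta_eq => j _; exact: eb.
have zcd : forall l, (l < r.+1.-1)%N -> zrel cd l.
  move=> l hl; apply/zrel_Delta; rewrite -(hg'.2 l hl); apply: Delta_eq => j _; exact: ecd.
have [[h [hb1 [he1 hc1]]] _] := UB A bd ed cd zbd zcd.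
exists h; split.
  move=> p' q' x.
  have [_ Uq] := U A (fun j => hf u (a j)) (fun l hl => zrel_hf u (za l hl)).
  apply: (Uq (mcomp h i) u) => j hj /=.
  apply: delta_inj; rewrite -Fh_delta hiT; last by lia.
  rewrite Fh_Phi.
  have -> : delta (hf u (a j)) = alT j by [].
  rewrite hal'; last by lia.
  apply: Phi_eq => [m hm|m hm|]; last by lia.
    rewrite /bT; case: eqP => [->|ne].
      by rewrite Fh_delta he1 ee.
    by rewrite Fh_delta hb1 ?eb //; lia.
  by rewrite /cT Fh_delta hc1 // ecd.
move=> p' q' y.
have [_ UBq] := UB B (fun j => hf v (b j)) (hf v e) (fun j => hf v (c j))
                 (fun l hl => zrel_hf v (zb l hl)) (fun l hl => zrel_hf v (zc l hl)).
apply: (UBq (mcomp f h) v) => [j hj||j hj] /=.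
- rewrite hb1 //; apply: delta_inj; rewrite -Fh_delta eb fb'; last by lia.
  by rewrite /bBT /bT (_ : (j == r) = false) ?Fh_delta //; lia.
- rewrite he1; apply: delta_inj; rewrite -Fh_delta ee fb' //.
  by rewrite /bBT /bT eqxx Fh_delta.
- rewrite hc1 //; apply: delta_inj; rewrite -Fh_delta ecd fg' //.
  by rewrite /gBT /cT Fh_delta.
Qed.

Lemma Iinj_IT r : Iinj r f -> IT f r.
Proof.
move=> hI p q al b g hal hb hg hF.
have [za U] := ZW_ok R n r.+1 p q.
have [zb [zc UB]] := BW_ok R n r.+1 p q.
have [i hi] := iota_ok R n r p q.
have hiT := iotaT hi.
pose cA := fun j => al j (p - j%:Z) (q - j%:Z).
have ecA : forall j, delta (cA j) = al j by move=> j; rewrite /cA -supp_delta //; exact: hal.1 j.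
have zcA : forall l, (l < r.+1)%N -> zrel cA l.
  move=> l hl; apply/zrel_Delta; rewrite -(hal.2 l hl); apply: Delta_eq => j _; exact: ecA.
have [[u hu] _] := U A cA zcA.
pose bd := fun j => b j (p + r.+1%:Z - 1 - j%:Z) (q + r.+1%:Z - 2 - j%:Z).
pose ed := b r p (q - 1).
pose cd := fun j => g j (p - 1 - j%:Z) (q - 1 - j%:Z).
have eb : forall j, delta (bd j) = b j by move=> j; rewrite /bd -supp_delta //; exact: hb.1 j.
have ee : delta ed = b r.
  rewrite /ed -supp_delta //; apply: (supp_eq _ _ (hb.1 r)); lia.
have ecd : forall j, delta (cd j) = g j by move=> j; rewrite /cd -supp_delta //; exact: hg.1 j.
have zbd : forall l, (l < r.+1.-1)%N -> zrel bd l.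
  move=> l hl; apply/zrel_Delta; rewrite -(hb.2 l hl); apply: Delta_eq => j _; exact: eb.
have zcd : forall l, (l < r.+1.-1)%N -> zrel cd l.
  move=> l hl; apply/zrel_Delta; rewrite -(hg.2 l hl); apply: Delta_eq => j _; exact: ecd.
have [[v [hv1 [hve hv2]]] _] := UB B bd ed cd zbd zcd.
have vbT : forall m, (m < r.+1)%N -> Fh v (bT (bB R n r.+1 p q) (eB R n r.+1 p q) m) = b m.
  move=> m hm; rewrite /bT; case: eqP => [->|ne].
    by rewrite Fh_delta hve ee.
  by rewrite Fh_delta hv1 ?eb //; lia.
have vcT : forall m, (m < r)%N -> Fh v (cT (cB R n r.+1 p q) m) = g m.
  by move=> m hm; rewrite /cT Fh_delta hv2 // ecd.
have hcomm : forall p' q' (x : ZWF R n r.+1 p q p' q'), hf f (hf u x) = hf v (hf i x).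
  move=> p' q' x.
  have [_ Uq] := U B (fun j => hf f (hf u (aZ R n r.+1 p q j)))
                   (fun l hl => zrel_hf f (zrel_hf u (za l hl))).
  apply: (Uq (mcomp f u) (mcomp v i)) => j hj /=.
  apply: delta_inj; rewrite -[LHS]Fh_delta -[RHS]Fh_delta hiT; last by lia.
  rewrite hu; last by lia.
  rewrite ecA hF; last by lia.
  rewrite Fh_Phi; apply: Phi_eq => [m hm|m hm|]; [by rewrite vbT | by rewrite vcT | lia].
have [h [hh1 hh2]] := hI p q _ _ _ _ _ _ i (ZW_ok R n r.+1 p q) (BW_ok R n r.+1 p q) hi u v hcomm.
have hfh := Fh_comp hh2.
exists (fun m => Fh h (bT (bB R n r.+1 p q) (eB R n r.+1 p q) m)),
       (fun m => Fh h (cT (cB R n r.+1 p q) m)).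
split; first exact: (Fh_chain h (@bT_chain _ _ _ r p q _ (eB R n r.+1 p q) zb)).
split; first exact: (Fh_chain h (@cT_chain _ _ _ r p q _ zc)).
split; first by move=> j hj; rewrite hfh vbT.
split; first by move=> j hj; rewrite hfh vcT.
move=> j hj; rewrite -Fh_Phi -hiT // Fh_delta hh1 hu; last by lia.
by rewrite ecA.
Qed.
End Final.

Theorem mainTheorem7 (R : comPzRingType) (n : option nat)
    (hn : if n is Some m then (2 <= m)%N else true)
    (r : nat) (A B : mcx R n) (f : mhom A B) :
  Iinj r f <-> (Eqi r f /\ Jinj 0 f /\ Jinj r f).
Proof.
split.
  move=> hI; have hT := Iinj_IT hI.
  split; first exact: IT_Eqi hT.
  by split; apply: JT_Jinj; [exact: IT_J0 hT | exact: IT_Jr hT].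
move=> [hE [hJ0 hJr]]; apply: IT_Iinj; apply: EJ_IT => //; exact: Jinj_JT.
Qed.
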